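(* Let $N\in\mathbb N$ (with $N\ge 2$ when $R_N=D_N$), $r>0$, $0<t_\ast<\infty$ and $t\in(0,t_\ast)$. For all $j,k\in\{1,\dots,N\}$, \[ \int_0^{2\pi r}\overline{M^{A_N}_j(x,t_\ast-t)}\,M^{A_N}_k(x,t)\,dx=m^{A_N}_j(t_\ast)\,\delta_{jk}, \] and, for $R_N\in\{B_N,B_N^\vee,C_N,C_N^\vee,BC_N,D_N\}$, \[ \int_0^{\pi r}\overline{M^{R_N}_j(x,t_\ast-t)}\,M^{R_N}_k(x,t)\,dx=m^{R_N}_j(t_\ast)\,\delta_{jk}, \] where the constants $m^{R_N}_j(t_\ast)$ are: for $R_N\in\{A_N,C_N,C_N^\vee,BC_N\}$, $m^{R_N}_j(t_\ast)=2\pi r\,\vartheta_2\big(\mathcal N^{R_N}J^{R_N}(j)\tau(t_\ast);(\mathcal N^{R_N})^2\tau(t_\ast)\big)$ for all $j$; for $R_N\in\{B_N,B_N^\vee\}$, $m^{R_N}_1(t_\ast)=4\pi r\,\vartheta_2\big(0;(\mathcal N^{R_N})^2\tau(t_\ast)\big)$ and $m^{R_N}_j(t_\ast)=2\pi r\,\vartheta_2\big(\mathcal N^{R_N}J^{R_N}(j)\tau(t_\ast);(\mathcal N^{R_N})^2\tau(t_\ast)\big)$ for $2\le j\le N$; for $D_N$, $m^{D_N}_1(t_\ast)=4\pi r\,\vartheta_2\big(0;(\mathcal N^{D_N})^2\tau(t_\ast)\big)$, $m^{D_N}_j(t_\ast)=2\pi r\,\vartheta_2\big(\mathcal N^{D_N}J^{D_N}(j)\tau(t_\ast);(\mathcal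 N^{D_N})^2\tau(t_\ast)\big)$ for $2\le j\le N-1$, and $m^{D_N}_N(t_\ast)=4\pi r\,\vartheta_2\big(\mathcal N^{D_N}(N-1)\tau(t_\ast);(\mathcal N^{D_N})^2\tau(t_\ast)\big)$.
   Context: Jacobi theta functions: for $v\in\mathbb C$, $\tau\in\mathbb H=\{\tau\in\mathbb C:\Im\tau>0\}$, with $z=e^{\pi i v}$, $q=e^{\pi i\tau}$, set $\vartheta_0(v;\tau)=\sum_{n\in\mathbb Z}(-1)^nq^{n^2}z^{2n}$, $\vartheta_1(v;\tau)=i\sum_{n\in\mathbb Z}(-1)^nq^{(n-1/2)^2}z^{2n-1}$, $\vartheta_2(v;\tau)=\sum_{n\in\mathbb Z}q^{(n-1/2)^2}z^{2n-1}$, $\vartheta_3(v;\tau)=\sum_{n\in\mathbb Z}q^{n^2}z^{2n}$. For $\sigma\in\mathbb R$, $z\in\mathbb C$, $\tau\in\mathbb H$ define $\Theta^A(\sigma,z,\tau)=e^{2\pi i\sigma z}\vartheta_2(\sigma\tau+z;\tau)$, $\Theta^B(\sigma,z,\tau)=e^{2\pi i\sigma z}\vartheta_1(\sigma\tau+z;\tau)-e^{-2\pi i\sigma z}\vartheta_1(\sigma\tau-z;\tau)$, $\Theta^C(\sigma,z,\tau)=e^{2\pi i\sigma z}\vartheta_2(\sigma\tau+z;\tau)-e^{-2\pi i\sigma z}\vartheta_2(\sigma\tau-z;\tau)$, $\Theta^D(\sigma,z,\tau)=e^{2\pi i\sigma z}\vartheta_2(\sigma\tau+z;\tau)+e^{-2\pi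 i\sigma z}\vartheta_2(\sigma\tau-z;\tau)$. The symbol $R_N$ ranges over the seven types $A_N,B_N,B_N^\vee,C_N,C_N^\vee,BC_N,D_N$. Set $\sharp(R_N)=A$ for $A_N$; $=B$ for $B_N,B_N^\vee$; $=C$ for $C_N,C_N^\vee,BC_N$; $=D$ for $D_N$. Set $J^{R_N}(j)=j-1/2$ for $A_N,C_N^\vee$; $=j-1$ for $B_N,B_N^\vee,D_N$; $=j$ for $C_N,BC_N$. Set $\mathcal N^{A_N}=N$, $\mathcal N^{B_N}=2N-1$, $\mathcal N^{B_N^\vee}=\mathcal N^{C_N^\vee}=2N$, $\mathcal N^{C_N}=2(N+1)$, $\mathcal N^{BC_N}=2N+1$, $\mathcal N^{D_N}=2(N-1)$. Fix $r>0$ and put $\xi(x)=x/(2\pi r)$, $\tau(t)=it/(2\pi r^2)$. For $x\in\mathbb R$, $t>0$, $j=1,\dots,N$, define $M^{R_N}_j(x,t)=\Theta^{\sharp(R_N)}\big(J^{R_N}(j)/\mathcal N^{R_N},\ \mathcal N^{R_N}\xi(x),\ (\mathcal N^{R_N})^2\tau(t)\big)$. The overline denotes complex conjugation. *)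

(* Defs.v *)
From Stdlib Require Export Reals ZArith.
From Coquelicot Require Export Coquelicot.
Open Scope R_scope.

Definition cexp (w : C) : C :=
  (exp (fst w) * cos (snd w), exp (fst w) * sin (snd w)).

Definition CSeries (a : nat -> C) : C :=
  (Series (fun n => fst (a n)), Series (fun n => snd (a n))).

Definition zsum (f : Z -> C) : C :=
  Cplus (CSeries (fun n => f (Z.of_nat n)))
        (CSeries (fun n => f (- Z.of_nat (S n))%Z)).

Definition Ci : C := (0, 1).
Definition Cpi : C := RtoC PI.

(* Jacobi theta functions, z = e^{pi i v}, q = e^{pi i tau}:
   q^{a} z^{b} = exp(pi i tau a + pi i v b) *)
Definition theta1 (v tau : C) : C :=
  Cmult Ci (zsum (fun n =>
    let m := IZR n - /2 in
    Cmult (RtoC ((-1) ^ Z.abs_nat n))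
      (cexp (Cplus (Cmult (Cmult Cpi Ci) (Cmult tau (RtoC (m * m))))
                   (Cmult (Cmult Cpi Ci) (Cmult v (RtoC (2 * IZR n - 1)))))))).

Definition theta2 (v tau : C) : C :=
  zsum (fun n =>
    let m := IZR n - /2 in
    cexp (Cplus (Cmult (Cmult Cpi Ci) (Cmult tau (RtoC (m * m))))
                (Cmult (Cmult Cpi Ci) (Cmult v (RtoC (2 * IZR n - 1)))))).

Definition ephase (sigma : R) (z : C) : C :=
  cexp (Cmult (Cmult (RtoC (2 * PI * sigma)) Ci) z).

Definition ThetaA (sigma : R) (z tau : C) : C :=
  Cmult (ephase sigma z) (theta2 (Cplus (Cmult (RtoC sigma) tau) z) tau).
Definition ThetaB (sigma : R) (z tau : C) : C :=
  Cminus (Cmult (ephase sigma z) (theta1 (Cplus (Cmult (RtoC sigma) tau) z) tau))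
         (Cmult (ephase sigma (Copp z)) (theta1 (Cminus (Cmult (RtoC sigma) tau) z) tau)).
Definition ThetaC (sigma : R) (z tau : C) : C :=
  Cminus (Cmult (ephase sigma z) (theta2 (Cplus (Cmult (RtoC sigma) tau) z) tau))
         (Cmult (ephase sigma (Copp z)) (theta2 (Cminus (Cmult (RtoC sigma) tau) z) tau)).
Definition ThetaD (sigma : R) (z tau : C) : C :=
  Cplus (Cmult (ephase sigma z) (theta2 (Cplus (Cmult (RtoC sigma) tau) z) tau))
        (Cmult (ephase sigma (Copp z)) (theta2 (Cminus (Cmult (RtoC sigma) tau) z) tau)).

Inductive rtype := TA | TB | TBv | TC | TCv | TBC | TD.

Inductive sharp := SA | SB | SC | SD.

Definition sharp_of (R0 : rtype) : sharp :=
  match R0 with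
  | TA => SA
  | TB | TBv => SB
  | TC | TCv | TBC => SC
  | TD => SD
  end.

Definition Theta (s : sharp) : R -> C -> C -> C :=
  match s with SA => ThetaA | SB => ThetaB | SC => ThetaC | SD => ThetaD end.

Definition Jfun (R0 : rtype) (j : nat) : R :=
  match R0 with
  | TA | TCv => INR j - /2
  | TB | TBv | TD => INR j - 1
  | TC | TBC => INR j
  end.

Definition calN (R0 : rtype) (N : nat) : R :=
  match R0 with
  | TA => INR N
  | TB => 2 * INR N - 1
  | TBv | TCv => 2 * INR N
  | TC => 2 * (INR N + 1)
  | TBC => 2 * INR N + 1
  | TD => 2 * (INR N - 1)
  end.

Definition xi (r x : R) : R := x / (2 * PI * r).
Definition tau (r t : R) : C := (0, t / (2 * PI * r ^ 2)).

Definition M (R0 : rtype) (N : nat) (r : R) (j : nat) (x t : R) : C :=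
  let NN := calN R0 N in
  Theta (sharp_of R0) (Jfun R0 j / NN) (RtoC (NN * xi r x))
        (Cmult (RtoC (NN ^ 2)) (tau r t)).

Definition mconst (R0 : rtype) (N : nat) (r : R) (j : nat) (ts : R) : C :=
  let NN := calN R0 N in
  let tt := Cmult (RtoC (NN ^ 2)) (tau r ts) in
  let generic := Cmult (RtoC (2 * PI * r))
                   (theta2 (Cmult (RtoC (NN * Jfun R0 j)) (tau r ts)) tt) in
  match R0 with
  | TA | TC | TCv | TBC => generic
  | TB | TBv =>
      if Nat.eqb j 1 then Cmult (RtoC (4 * PI * r)) (theta2 (RtoC 0) tt)
      else generic
  | TD =>
      if Nat.eqb j 1 then Cmult (RtoC (4 * PI * r)) (theta2 (RtoC 0) tt)
      else if Nat.eqb j N then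
        Cmult (RtoC (4 * PI * r))
              (theta2 (Cmult (RtoC (NN * (INR N - 1))) (tau r ts)) tt)
      else generic
  end.

Definition upper (R0 : rtype) (r : R) : R :=
  match R0 with TA => 2 * PI * r | _ => PI * r end.

(* Main.v *)
Require Import Defs.
From Stdlib Require Import Lra Lia Psatz FunctionalExtensionality.
Open Scope R_scope.

Definition CR := C_R_NormedModule.
Definition isC (a : nat -> C) (l : C) := @is_series R_AbsRing CR a l.

Lemma normC (z : C) : @norm R_AbsRing CR z = Cmod z.
Proof.
  unfold norm; simpl; unfold prod_norm, Cmod. simpl.
  change (norm (fst z)) with (Rabs (fst z)). change (norm (snd z)) with (Rabs (snd z)).
  rewrite !Rmult_1_r. rewrite <- !Rsqr_def, <- !Rsqr_abs. reflexivity.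
Qed.

Lemma sum_n_fst (a : nat -> C) N : fst (@sum_n CR a N) = sum_n (fun n => fst (a n)) N.
Proof.
  induction N. rewrite !sum_O. reflexivity.
  rewrite !sum_Sn. simpl. rewrite <- IHN. reflexivity.
Qed.
Lemma sum_n_snd (a : nat -> C) N : snd (@sum_n CR a N) = sum_n (fun n => snd (a n)) N.
Proof.
  induction N. rewrite !sum_O. reflexivity.
  rewrite !sum_Sn. simpl. rewrite <- IHN. reflexivity.
Qed.

Lemma isC_fst a l : isC a l -> is_series (fun n => fst (a n)) (fst l).
Proof.
  unfold isC, is_series. intros H P [eps HP].
  assert (H1 := H (fun y : CR => P (fst y))).
  unfold filtermap in *. 
  eapply filter_imp; [| apply H1].
  - intros N HN. rewrite <- sum_n_fst. exact HN.
  - exists eps. intros y [Hy _]. apply HP. exact Hy.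
Qed.
Lemma isC_snd a l : isC a l -> is_series (fun n => snd (a n)) (snd l).
Proof.
  unfold isC, is_series. intros H P [eps HP].
  assert (H1 := H (fun y : CR => P (snd y))).
  unfold filtermap in *. 
  eapply filter_imp; [| apply H1].
  - intros N HN. rewrite <- sum_n_snd. exact HN.
  - exists eps. intros y [_ Hy]. apply HP. exact Hy.
Qed.
Lemma isC_pair a l : is_series (fun n => fst (a n)) (fst l) ->
  is_series (fun n => snd (a n)) (snd l) -> isC a l.
Proof.
  unfold isC, is_series. intros H1 H2 P [eps HP].
  unfold filtermap.
  assert (K1 := H1 (ball (fst l) eps) (locally_ball _ _)).
  assert (K2 := H2 (ball (snd l) eps) (locally_ball _ _)).
  unfold filtermap in K1, K2.
  generalize (filter_and _ _ K1 K2). apply filter_imp.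
  intros N [B1 B2]. apply HP. split.
  rewrite sum_n_fst. exact B1. rewrite sum_n_snd. exact B2.
Qed.

Lemma CSeries_correct a l : isC a l -> CSeries a = l.
Proof.
  intros H. unfold CSeries. rewrite (is_series_unique _ _ (isC_fst _ _ H)).
  rewrite (is_series_unique _ _ (isC_snd _ _ H)). destruct l; reflexivity.
Qed.

Lemma exC a : ex_series (fun n => Cmod (a n)) -> exists l, isC a l.
Proof.
  intros H. assert (K : @ex_series R_AbsRing C_R_CompleteNormedModule a).
  { apply (@ex_series_le R_AbsRing C_R_CompleteNormedModule a (fun n => Cmod (a n))); auto.
    intros n. change (@norm R_AbsRing CR (a n) <= Cmod (a n)). rewrite normC; lra. }
  destruct K as [l Hl]. exists l. exact Hl.
Qed.

Definition zsummable (f : Z -> C) :=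
  ex_series (fun n => Cmod (f (Z.of_nat n))) /\
  ex_series (fun n => Cmod (f (- Z.of_nat (S n))%Z)).

Lemma zsum_correct f l1 l2 : isC (fun n => f (Z.of_nat n)) l1 ->
  isC (fun n => f (- Z.of_nat (S n))%Z) l2 -> zsum f = Cplus l1 l2.
Proof.
  intros H1 H2. unfold zsum. rewrite (CSeries_correct _ _ H1), (CSeries_correct _ _ H2).
  reflexivity.
Qed.

Lemma zsum_ext f g : (forall n, f n = g n) -> zsum f = zsum g.
Proof. intros H. replace g with f; auto. apply functional_extensionality; auto. Qed.

Lemma CR_plus (x y : C) : @plus CR x y = Cplus x y.
Proof. reflexivity. Qed.

Lemma sum_n_zero (a : nat -> C) N : (forall n, (n <= N)%nat -> a n = RtoC 0) -> @sum_n CR a N = RtoC 0.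
Proof.
  induction N; intros H. rewrite sum_O. apply H; lia.
  rewrite sum_Sn, CR_plus, IHN by (intros; apply H; lia). rewrite H by lia.
  unfold RtoC, Cplus; simpl. f_equal; ring.
Qed.

Lemma isC_delta (a : nat -> C) k : (forall n, n <> k -> a n = RtoC 0) -> isC a (a k).
Proof.
  intros H. unfold isC, is_series. intros P HP. unfold filtermap.
  exists k. intros N HN. apply locally_singleton in HP.
  match goal with |- P ?s => replace s with (a k); auto end.
  induction N.
  - assert (k = 0%nat) by lia. subst. rewrite sum_O. reflexivity.
  - destruct (Nat.eq_dec k (S N)).
    + subst. rewrite sum_Sn, CR_plus.
      rewrite sum_n_zero by (intros; apply H; lia).
      destruct (a (S N)). unfold RtoC, Cplus; simpl. f_equal; ring.
    + rewrite sum_Sn, CR_plus, <- IHN by lia. rewrite (H (S N)) by lia.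
      destruct (a k). unfold RtoC, Cplus; simpl. f_equal; ring.
Qed.

Lemma isC_zero (a : nat -> C) : (forall n, a n = RtoC 0) -> isC a (RtoC 0).
Proof. intros H. rewrite <- (H 0%nat). apply isC_delta. auto. Qed.

Lemma zsum_delta f n0 : (forall n, n <> n0 -> f n = RtoC 0) -> zsum f = f n0.
Proof.
  intros H. destruct (Z_le_gt_dec 0 n0).
  - rewrite (zsum_correct f (f n0) (RtoC 0)).
    + destruct (f n0); unfold RtoC, Cplus; simpl; f_equal; ring.
    + replace (f n0) with (f (Z.of_nat (Z.to_nat n0))) by (f_equal; lia).
      apply (isC_delta (fun n => f (Z.of_nat n))). intros n Hn. apply H. lia.
    + apply isC_zero. intros n. apply H. lia.
  - rewrite (zsum_correct f (RtoC 0) (f n0)).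
    + destruct (f n0); unfold RtoC, Cplus; simpl; f_equal; ring.
    + apply isC_zero. intros n. apply H. lia.
    + replace (f n0) with (f (- Z.of_nat (S (Z.to_nat (- n0 - 1))))%Z) by (f_equal; lia).
      apply (isC_delta (fun n => f (- Z.of_nat (S n))%Z)). intros n Hn. apply H. lia.
Qed.

Lemma CR_minus (x y : C) : @minus CR x y = Cminus x y.
Proof. reflexivity. Qed.

Lemma LIMLE (x : nat -> C) l c B N :
  filterlim x eventually (@locally CR l) ->
  (forall M, (N <= M)%nat -> Cmod (Cminus (x M) c) <= B) -> Cmod (Cminus l c) <= B.
Proof.
  intros Hx HB. destruct (Rle_lt_dec (Cmod (Cminus l c)) B) as [|Hlt]; auto.
  exfalso. set (d := Cmod (Cminus l c) - B).
  assert (Hd : 0 < d) by (unfold d; lra).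
  assert (Hnf := @norm_factor_gt_0 R_AbsRing CR).
  set (eps := mkposreal (d / @norm_factor R_AbsRing CR) (Rdiv_lt_0_compat _ _ Hd Hnf)).
  destruct (Hx (ball l eps) (locally_ball _ _)) as [N0 HN0].
  set (M := max N N0).
  assert (B1 := HN0 M ltac:(lia)). assert (B2 := HB M ltac:(lia)).
  apply (@norm_compat2 R_AbsRing CR) in B1.
  rewrite normC in B1. simpl in B1.
  replace (norm_factor * (d / norm_factor)) with d in B1 by (field; lra).
  assert (T := Cmod_triangle (Cminus l (x M)) (Cminus (x M) c)).
  replace (Cplus (Cminus l (x M)) (Cminus (x M) c)) with (Cminus l c) in T
    by (unfold Cminus, Cplus, Copp; simpl; f_equal; ring).
  replace (Cminus l (x M)) with (Copp (Cminus (x M) l)) in T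
    by (unfold Cminus, Cplus, Copp; simpl; f_equal; ring).
  rewrite Cmod_opp in T. unfold d in *.
  change (@minus CR (x M) l) with (Cminus (x M) l) in B1. lra.
Qed.

Lemma tail_le (a : nat -> C) (A : nat -> R) N M :
  (forall n, Cmod (a n) <= A n) -> (N <= M)%nat ->
  Cmod (Cminus (@sum_n CR a M) (@sum_n CR a N)) <= sum_n A M - sum_n A N.
Proof.
  intros HA HNM. induction HNM.
  - replace (Cminus (@sum_n CR a N) (@sum_n CR a N)) with (RtoC 0)
      by (unfold Cminus, Cplus, Copp, RtoC; simpl; f_equal; ring).
    rewrite Cmod_0. lra.
  - rewrite !sum_Sn. rewrite CR_plus.
    change (plus (sum_n A m) (A (S m))) with (sum_n A m + A (S m)).
    replace (Cminus (Cplus (@sum_n CR a m) (a (S m))) (@sum_n CR a N))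
      with (Cplus (Cminus (@sum_n CR a m) (@sum_n CR a N)) (a (S m)))
      by (unfold Cminus, Cplus, Copp; simpl; f_equal; ring).
    eapply Rle_trans. apply Cmod_triangle. specialize (HA (S m)). lra.
Qed.

Lemma sum_le_Series (A : nat -> R) M : (forall n, 0 <= A n) -> ex_series A -> sum_n A M <= Series A.
Proof.
  intros H0 H. apply is_lim_seq_incr_compare.
  apply (Series_correct _ H).
  intros n. rewrite sum_Sn. change (plus (sum_n A n) (A (S n))) with (sum_n A n + A (S n)).
  specialize (H0 (S n)). lra.
Qed.

Lemma tail_bound (a : nat -> C) (A : nat -> R) S N :
  (forall n, Cmod (a n) <= A n) -> ex_series A -> isC a S ->
  Cmod (Cminus S (@sum_n CR a N)) <= Series A - sum_n A N.
Proof.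
  intros HA HexA HS. apply (LIMLE (@sum_n CR a) S _ _ N HS).
  intros M HM. eapply Rle_trans. apply tail_le; eauto.
  assert (sum_n A M <= Series A); [|lra].
  apply sum_le_Series; auto. intros n. eapply Rle_trans; [|apply HA]. apply Cmod_ge_0.
Qed.

Lemma normsum (a : nat -> C) (A : nat -> R) M :
  (forall n, Cmod (a n) <= A n) -> Cmod (@sum_n CR a M) <= sum_n A M.
Proof.
  intros HA. induction M. rewrite !sum_O. auto.
  rewrite !sum_Sn, CR_plus. change (plus (sum_n A M) (A (S M))) with (sum_n A M + A (S M)).
  eapply Rle_trans. apply Cmod_triangle. specialize (HA (S M)). lra.
Qed.

Lemma series_bound (a : nat -> C) (A : nat -> R) S :
  (forall n, Cmod (a n) <= A n) -> ex_series A -> isC a S -> Cmod S <= Series A.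
Proof.
  intros HA HexA HS.
  replace S with (Cminus S (RtoC 0)) by (unfold Cminus, Cplus, Copp, RtoC; destruct S; simpl; f_equal; ring).
  apply (LIMLE (@sum_n CR a) S (RtoC 0) _ 0%nat HS).
  intros M _.
  replace (Cminus (@sum_n CR a M) (RtoC 0)) with (@sum_n CR a M)
     by (unfold Cminus, Cplus, Copp, RtoC; destruct (@sum_n CR a M); simpl; f_equal; ring).
  eapply Rle_trans. apply normsum; eauto. apply sum_le_Series; auto.
  intros n; eapply Rle_trans; [|apply HA]; apply Cmod_ge_0.
Qed.

Definition CRC := C_R_CompleteNormedModule.

Lemma Cmult_plus_r (a b c : C) : Cmult a (Cplus b c) = Cplus (Cmult a b) (Cmult a c).
Proof. destruct a, b, c; unfold Cmult, Cplus; simpl; f_equal; ring. Qed.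

Lemma INT1 (u : nat -> R -> C) (A : nat -> R) (h : R -> C) (H : R) (I : nat -> C) a b
  (Sx : R -> C) :
  (forall n x, Cmod (u n x) <= A n) -> ex_series A -> (forall x, Cmod (h x) <= H) ->
  (forall x, isC (fun n => u n x) (Sx x)) ->
  (forall n, @is_RInt CR (fun x => Cmult (h x) (u n x)) a b (I n)) ->
  exists l, isC I l /\ @is_RInt CR (fun x => Cmult (h x) (Sx x)) a b l.
Proof.
  intros HA HexA Hh HS HI.
  destruct (@filterlim_RInt nat CRC (fun N x => Cmult (h x) (@sum_n CR (fun n => u n x) N)) a b
     eventually _ (fun x => Cmult (h x) (Sx x)) (@sum_n CR I)) as [If [H1 H2]].
  - intros N. induction N.
    + replace (@sum_n CR I 0) with (I 0%nat) by (rewrite sum_O; auto).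
      eapply is_RInt_ext; [| apply (HI 0%nat)]. intros x _. simpl. rewrite sum_O. reflexivity.
    + replace (@sum_n CR I (S N)) with (@plus CR (@sum_n CR I N) (I (S N))) by (rewrite sum_Sn; auto).
      eapply is_RInt_ext; [| eapply is_RInt_plus; [exact IHN | exact (HI (S N))]].
      intros x _. simpl. rewrite !sum_Sn. rewrite CR_plus. rewrite Cmult_plus_r. reflexivity.
  - unfold filterlim, filter_le, filtermap. intros P [eps HP].
    assert (HH : 0 < H + 1) by (specialize (Hh 0); assert (0 <= Cmod (h 0)) by apply Cmod_ge_0; lra).
    assert (Hcv := Series_correct _ HexA).
    destruct (Hcv (ball (Series A) (mkposreal _ (Rdiv_lt_0_compat _ _ (cond_pos eps) HH))) (locally_ball _ _))
      as [N0 HN0].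
    exists N0. intros N HN. apply HP. intros x. simpl.
    apply (@norm_compat1 R_AbsRing CR).
    rewrite normC. change (@minus CR (Cmult (h x) (@sum_n CR (fun n : nat => u n x) N)) (Cmult (h x) (Sx x)))
      with (Cminus (Cmult (h x) (@sum_n CR (fun n : nat => u n x) N)) (Cmult (h x) (Sx x))).
    replace (Cminus (Cmult (h x) (@sum_n CR (fun n : nat => u n x) N)) (Cmult (h x) (Sx x)))
      with (Cmult (h x) (Copp (Cminus (Sx x) (@sum_n CR (fun n : nat => u n x) N))))
      by (destruct (h x), (Sx x), (@sum_n CR (fun n : nat => u n x) N); unfold Cmult, Cminus, Cplus, Copp; simpl; f_equal; ring).
    rewrite Cmod_mult, Cmod_opp.
    assert (T := tail_bound (fun n => u n x) A (Sx x) N (fun n => HA n x) HexA (HS x)).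
    assert (B := HN0 N HN). simpl in B. unfold ball in B; simpl in B. unfold AbsRing_ball in B.
    unfold abs, minus, plus, opp in B; simpl in B.
    assert (sum_n A N <= Series A).
    { apply sum_le_Series; auto. intros n; eapply Rle_trans; [|apply (HA n 0)]; apply Cmod_ge_0. }
    assert (B2 : Rabs (sum_n A N + - Series A) < eps / (H + 1)) by exact B. clear B. assert (Hle : sum_n A N + - Series A <= 0) by lra. rewrite (Rabs_left1 _ Hle) in B2.
    assert (Hx := Hh x). assert (0 <= Cmod (h x)) by apply Cmod_ge_0.
    assert (0 <= Cmod (Cminus (Sx x) (@sum_n CR (fun n : nat => u n x) N))) by apply Cmod_ge_0.
    apply Rle_lt_trans with ((H + 1) * (Series A - sum_n A N)).
    + apply Rmult_le_compat; lra.
    + assert (K : Series A - sum_n A N < eps / (H + 1)) by lra.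
      apply Rmult_lt_compat_l with (r := H + 1) in K; auto.
      replace ((H + 1) * (eps / (H + 1))) with (pos eps) in K by (field; lra). exact K.
  - exists If. split; auto.
Qed.

Lemma exC_dom (a : nat -> C) (A : nat -> R) : (forall n, Cmod (a n) <= A n) -> ex_series A ->
  exists l, isC a l.
Proof.
  intros HA H. assert (K : @ex_series R_AbsRing C_R_CompleteNormedModule a).
  { apply (@ex_series_le R_AbsRing C_R_CompleteNormedModule a A); auto.
    intros n. change (@norm R_AbsRing CR (a n) <= A n). rewrite normC; auto. }
  destruct K as [l Hl]. exists l. exact Hl.
Qed.

Lemma CSeries_dom (a : nat -> C) (A : nat -> R) : (forall n, Cmod (a n) <= A n) -> ex_series A ->
  isC a (CSeries a).
Proof.
  intros HA H. destruct (exC_dom a A HA H) as [l Hl]. rewrite (CSeries_correct _ _ Hl). auto.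
Qed.

Lemma INTZ (u : Z -> R -> C) (A : Z -> R) (h : R -> C) (H : R) (I : Z -> C) a b :
  (forall n x, Cmod (u n x) <= A n) ->
  ex_series (fun k => A (Z.of_nat k)) -> ex_series (fun k => A (- Z.of_nat (S k))%Z) ->
  (forall x, Cmod (h x) <= H) ->
  (forall n, @is_RInt CR (fun x => Cmult (h x) (u n x)) a b (I n)) ->
  @is_RInt CR (fun x => Cmult (h x) (zsum (fun n => u n x))) a b (zsum I).
Proof.
  intros HA H1 H2 Hh HI.
  destruct (INT1 (fun k x => u (Z.of_nat k) x) (fun k => A (Z.of_nat k)) h H
     (fun k => I (Z.of_nat k)) a b (fun x => CSeries (fun k => u (Z.of_nat k) x)))
     as [l1 [K1 L1]]; auto.
  { intros x. apply (CSeries_dom _ (fun k => A (Z.of_nat k))); auto. }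
  destruct (INT1 (fun k x => u (- Z.of_nat (S k))%Z x) (fun k => A (- Z.of_nat (S k))%Z) h H
     (fun k => I (- Z.of_nat (S k))%Z) a b (fun x => CSeries (fun k => u (- Z.of_nat (S k))%Z x)))
     as [l2 [K2 L2]]; auto.
  { intros x. apply (CSeries_dom _ (fun k => A (- Z.of_nat (S k))%Z)); auto. }
  rewrite (zsum_correct I l1 l2 K1 K2). change (Cplus l1 l2) with (@plus CR l1 l2).
  eapply is_RInt_ext; [| eapply is_RInt_plus; [exact L1 | exact L2]].
  intros x _. unfold zsum. rewrite Cmult_plus_r. reflexivity.
Qed.

Lemma Cconj_zsum f : Cconj (zsum f) = zsum (fun n => Cconj (f n)).
Proof.
  unfold zsum, CSeries, Cconj, Cplus; simpl. f_equal.
  rewrite !Series_opp. ring.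
Qed.

Definition Ex (w x : R) : C := (cos (w * x), sin (w * x)).

Lemma IZR_period_sin y k : sin (y + 2 * IZR k * PI) = sin y.
Proof.
  destruct k.
  - simpl. f_equal. ring.
  - replace (IZR (Z.pos p)) with (INR (Pos.to_nat p)) by (rewrite INR_IZR_INZ, positive_nat_Z; reflexivity).
    apply sin_period.
  - replace (IZR (Z.neg p)) with (- INR (Pos.to_nat p)) by (rewrite INR_IZR_INZ, positive_nat_Z; reflexivity).
    rewrite <- (sin_period (y + 2 * - INR (Pos.to_nat p) * PI) (Pos.to_nat p)). f_equal. ring.
Qed.
Lemma IZR_period_cos y k : cos (y + 2 * IZR k * PI) = cos y.
Proof.
  destruct k.
  - simpl. f_equal. ring.
  - replace (IZR (Z.pos p)) with (INR (Pos.to_nat p)) by (rewrite INR_IZR_INZ, positive_nat_Z; reflexivity).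
    apply cos_period.
  - replace (IZR (Z.neg p)) with (- INR (Pos.to_nat p)) by (rewrite INR_IZR_INZ, positive_nat_Z; reflexivity).
    rewrite <- (cos_period (y + 2 * - INR (Pos.to_nat p) * PI) (Pos.to_nat p)). f_equal. ring.
Qed.

Lemma is_RInt_val {V : NormedModule R_AbsRing} (f : R -> V) a b l l' :
  is_RInt f a b l -> l = l' -> is_RInt f a b l'.
Proof. intros H ->. exact H. Qed.

Lemma EXPINT r c (k : Z) : 0 < r ->
  @is_RInt CR (fun x => Ex (IZR k / r) x) c (c + 2 * PI * r)
    (if Z.eq_dec k 0 then RtoC (2 * PI * r) else RtoC 0).
Proof.
  intros Hr. destruct (Z.eq_dec k 0) as [->|Hk]; unfold RtoC;
    apply (is_RInt_fct_extend_pair (U := R_NormedModule) (V := R_NormedModule)); simpl.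
  - apply (is_RInt_ext (fun _ => 1)). intros x _. replace (0 / r * x) with 0 by (field; lra).
    rewrite cos_0. reflexivity.
    eapply is_RInt_val. apply (@is_RInt_const R_NormedModule). unfold scal; simpl. unfold mult; simpl. ring.
  - apply (is_RInt_ext (fun _ => 0)). intros x _. replace (0 / r * x) with 0 by (field; lra).
    rewrite sin_0. reflexivity.
    eapply is_RInt_val. apply (@is_RInt_const R_NormedModule). unfold scal; simpl. unfold mult; simpl. ring.
  - set (w := IZR k / r).
    assert (Hw : w <> 0). { unfold w. unfold Rdiv. apply Rmult_integral_contrapositive_currified; [apply not_0_IZR; auto | apply Rinv_neq_0_compat; lra]. }
    eapply is_RInt_val. apply (is_RInt_derive (V := R_CompleteNormedModule) (fun x => sin (w * x) / w)).
    * intros x _. auto_derive; auto. field. auto.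
    * intros x _. apply (ex_derive_continuous (fun x => cos (w * x))). auto_derive; auto.
    * simpl. unfold minus, plus, opp; simpl.
      replace (w * (c + 2 * PI * r)) with (w * c + 2 * IZR k * PI) by (unfold w; field; lra).
      rewrite IZR_period_sin. field. auto.
  - set (w := IZR k / r).
    assert (Hw : w <> 0). { unfold w. unfold Rdiv. apply Rmult_integral_contrapositive_currified; [apply not_0_IZR; auto | apply Rinv_neq_0_compat; lra]. }
    eapply is_RInt_val. apply (is_RInt_derive (V := R_CompleteNormedModule) (fun x => - cos (w * x) / w)).
    * intros x _. auto_derive; auto. field. auto.
    * intros x _. apply (ex_derive_continuous (fun x => sin (w * x))). auto_derive; auto.
    * simpl. unfold minus, plus, opp; simpl.
      replace (w * (c + 2 * PI * r)) with (w * c + 2 * IZR k * PI) by (unfold w; field; lra).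
      rewrite IZR_period_cos. field. auto.
Qed.

Definition F (a : Z -> C) (w : Z -> R) (x : R) : C := zsum (fun n => Cmult (a n) (Ex (w n) x)).

Lemma Ex_mod w x : Cmod (Ex w x) = 1.
Proof.
  unfold Cmod, Ex; simpl. rewrite Rmult_1_r, Rmult_1_r.
  replace (cos (w * x) * cos (w * x) + sin (w * x) * sin (w * x)) with 1. apply sqrt_1.
  rewrite <- (sin2_cos2 (w * x)). unfold Rsqr. ring.
Qed.

Lemma Ex_conj w x : Cconj (Ex w x) = Ex (- w) x.
Proof.
  unfold Cconj, Ex; simpl. replace (- w * x) with (- (w * x)) by ring.
  rewrite cos_neg, sin_neg. reflexivity.
Qed.

Lemma Ex_mult w1 w2 x : Cmult (Ex w1 x) (Ex w2 x) = Ex (w1 + w2) x.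
Proof.
  unfold Cmult, Ex; simpl. replace ((w1 + w2) * x) with (w1 * x + w2 * x) by ring.
  rewrite cos_plus, sin_plus. f_equal; ring.
Qed.

Lemma Cconj_mult (a b : C) : Cconj (Cmult a b) = Cmult (Cconj a) (Cconj b).
Proof. destruct a, b; unfold Cconj, Cmult; simpl; f_equal; ring. Qed.

Lemma zsum_bound (f : Z -> C) : zsummable f ->
  Cmod (zsum f) <= Series (fun k => Cmod (f (Z.of_nat k))) + Series (fun k => Cmod (f (- Z.of_nat (S k))%Z)).
Proof.
  intros [H1 H2]. unfold zsum. eapply Rle_trans. apply Cmod_triangle.
  apply Rplus_le_compat.
  - apply (series_bound (fun k => f (Z.of_nat k)) (fun k => Cmod (f (Z.of_nat k)))); auto. intros; lra.
    apply (CSeries_dom _ (fun k => Cmod (f (Z.of_nat k)))); auto. intros; lra.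
  - apply (series_bound (fun k => f (- Z.of_nat (S k))%Z) (fun k => Cmod (f (- Z.of_nat (S k))%Z))); auto. intros; lra.
    apply (CSeries_dom _ (fun k => Cmod (f (- Z.of_nat (S k))%Z))); auto. intros; lra.
Qed.

Lemma is_RInt_Cmult_l (f : R -> C) a b l (g : C) :
  @is_RInt CR f a b l -> @is_RInt CR (fun x => Cmult g (f x)) a b (Cmult g l).
Proof.
  intros H.
  assert (H1 := is_RInt_fct_extend_fst f a b l H).
  assert (H2 := is_RInt_fct_extend_snd f a b l H).
  unfold Cmult. apply (is_RInt_fct_extend_pair (U := R_NormedModule) (V := R_NormedModule)); simpl.
  - apply (@is_RInt_minus R_NormedModule).
    apply (@is_RInt_scal R_NormedModule _ _ _ (fst g) _ H1).
    apply (@is_RInt_scal R_NormedModule _ _ _ (snd g) _ H2).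
  - apply (@is_RInt_plus R_NormedModule).
    apply (@is_RInt_scal R_NormedModule _ _ _ (fst g) _ H2).
    apply (@is_RInt_scal R_NormedModule _ _ _ (snd g) _ H1).
Qed.

Lemma CORE (a b : Z -> C) (w v : Z -> R) r c : 0 < r -> zsummable a -> zsummable b ->
  (forall n m, exists z : Z, (w n - v m) * r = IZR z) ->
  @is_RInt CR (fun x => Cmult (Cconj (F b v x)) (F a w x)) c (c + 2 * PI * r)
    (zsum (fun n => zsum (fun m => if Req_EM_T (w n) (v m)
        then Cmult (RtoC (2 * PI * r)) (Cmult (a n) (Cconj (b m))) else RtoC 0))).
Proof.
  intros Hr Ha Hb Hwv. destruct Ha as [Ha1 Ha2].
  unfold F at 2.
  apply (INTZ (fun n x => Cmult (a n) (Ex (w n) x)) (fun n => Cmod (a n)) _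
     (Series (fun k => Cmod (b (Z.of_nat k))) + Series (fun k => Cmod (b (- Z.of_nat (S k))%Z)))); auto.
  - intros n x. rewrite Cmod_mult, Ex_mod. lra.
  - intros x. rewrite Cmod_conj. unfold F. eapply Rle_trans. apply zsum_bound.
    destruct Hb as [Hb1 Hb2]. split.
    + eapply ex_series_ext; [| exact Hb1]. intros k. simpl. rewrite Cmod_mult, Ex_mod. ring.
    + eapply ex_series_ext; [| exact Hb2]. intros k. simpl. rewrite Cmod_mult, Ex_mod. ring.
    + right. f_equal; apply Series_ext; intros k; rewrite Cmod_mult, Ex_mod; ring.
  - intros n.
    apply (is_RInt_ext (fun x => Cmult (Cmult (a n) (Ex (w n) x))
              (zsum (fun m => Cmult (Cconj (b m)) (Ex (- v m) x))))).
    { intros x _. unfold F. rewrite Cconj_zsum.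
      rewrite (zsum_ext (fun m => Cconj (Cmult (b m) (Ex (v m) x))) (fun m => Cmult (Cconj (b m)) (Ex (- v m) x))).
      2:{ intros m. rewrite Cconj_mult, Ex_conj. reflexivity. }
      destruct (Cmult (a n) (Ex (w n) x)), (zsum (fun m : Z => Cmult (Cconj (b m)) (Ex (- v m) x))).
      unfold Cmult; simpl; f_equal; ring. }
    destruct Hb as [Hb1 Hb2].
    apply (INTZ (fun m x => Cmult (Cconj (b m)) (Ex (- v m) x)) (fun m => Cmod (b m)) _ (Cmod (a n))); auto.
    + intros m x. rewrite Cmod_mult, Ex_mod, Cmod_conj. lra.
    + intros x. rewrite Cmod_mult, Ex_mod. lra.
    + intros m. destruct (Hwv n m) as [z Hz].
      assert (Hw : w n + - v m = IZR z / r) by (apply (Rmult_eq_reg_r r); [unfold Rdiv; rewrite Rmult_assoc, Rinv_l; lra | lra]).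
      apply (is_RInt_ext (fun x => Cmult (Cmult (a n) (Cconj (b m))) (Ex (IZR z / r) x))).
      { intros x _. rewrite <- Hw, <- Ex_mult.
        destruct (a n), (b m), (Ex (w n) x), (Ex (- v m) x). unfold Cmult, Cconj; simpl; f_equal; ring. }
      eapply is_RInt_val. apply is_RInt_Cmult_l. apply EXPINT; auto.
      destruct (Z.eq_dec z 0) as [Hz0|Hz0]; destruct (Req_EM_T (w n) (v m)) as [E|E].
      * destruct (a n), (b m). unfold Cmult, Cconj, RtoC; simpl; f_equal; ring.
      * exfalso. subst z. apply E. assert (IZR 0 / r = 0) by (unfold Rdiv; ring). lra.
      * exfalso. apply Hz0. apply eq_IZR. rewrite <- Hz. rewrite E. ring.
      * destruct (a n), (b m). unfold Cmult, Cconj, RtoC; simpl; f_equal; ring.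
Qed.

Definition kap (NN J : R) (n : Z) : R := NN * (IZR n - /2) + J.
Definition cc (NN J r t : R) (n : Z) : R := exp (- t * (kap NN J n ^ 2 - J ^ 2) / (2 * r ^ 2)).

Definition term2 (n : Z) (v tau0 : C) : C :=
  let m := IZR n - /2 in
  cexp (Cplus (Cmult (Cmult Cpi Ci) (Cmult tau0 (RtoC (m * m))))
              (Cmult (Cmult Cpi Ci) (Cmult v (RtoC (2 * IZR n - 1))))).

Lemma cexp_mult a b : Cmult (cexp a) (cexp b) = cexp (Cplus a b).
Proof.
  destruct a as [a1 a2], b as [b1 b2]. unfold cexp, Cmult, Cplus; simpl.
  rewrite exp_plus, cos_plus, sin_plus. f_equal; ring.
Qed.

Lemma cexp_form w p q : fst w = p -> snd w = q -> cexp w = Cmult (RtoC (exp p)) (Ex 1 q).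
Proof.
  destruct w; simpl; intros -> ->. unfold cexp, Ex, Cmult, RtoC; simpl.
  rewrite Rmult_1_l. f_equal; ring.
Qed.

Lemma Cmod_cexp w : Cmod (cexp w) = exp (fst w).
Proof.
  destruct w as [a b]. unfold cexp, Cmod; simpl.
  replace (exp a * cos b * (exp a * cos b * 1) + exp a * sin b * (exp a * sin b * 1))
    with (exp a ^ 2 * (sin b ^ 2 + cos b ^ 2)) by ring.
  rewrite <- !Rsqr_pow2, sin2_cos2, Rmult_1_r, Rsqr_pow2.
  apply sqrt_pow2. left; apply exp_pos.
Qed.

Lemma Ex1 w x : Ex 1 (w * x) = Ex w x.
Proof. unfold Ex. rewrite Rmult_1_l. reflexivity. Qed.

Section Term.
Variables (NN J r t x : R) (n : Z).
Hypothesis HNN : NN <> 0.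
Hypothesis Hr : 0 < r.

Let sig := J / NN.
Let z := RtoC (NN * xi r x).
Let tt := Cmult (RtoC (NN ^ 2)) (tau r t).

Lemma TERMp : Cmult (ephase sig z) (term2 n (Cplus (Cmult (RtoC sig) tt) z) tt) =
   Cmult (RtoC (cc NN J r t n)) (Ex (kap NN J n / r) x).
Proof.
  unfold ephase, term2. rewrite cexp_mult.
  assert (PI <> 0) by (apply PI_neq0).
  rewrite (cexp_form _ (- t * (kap NN J n ^ 2 - J ^ 2) / (2 * r ^ 2)) (kap NN J n / r * x)).
  - rewrite Ex1. reflexivity.
  - unfold sig, z, tt, Cmult, Cplus, RtoC, Ci, Cpi, tau, xi, kap; simpl. field. lra.
  - unfold sig, z, tt, Cmult, Cplus, RtoC, Ci, Cpi, tau, xi, kap; simpl. field. lra.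
Qed.

Lemma TERMm : Cmult (ephase sig (Copp z)) (term2 n (Cminus (Cmult (RtoC sig) tt) z) tt) =
   Cmult (RtoC (cc NN J r t n)) (Ex (- kap NN J n / r) x).
Proof.
  unfold ephase, term2. rewrite cexp_mult.
  assert (PI <> 0) by (apply PI_neq0).
  rewrite (cexp_form _ (- t * (kap NN J n ^ 2 - J ^ 2) / (2 * r ^ 2)) (- kap NN J n / r * x)).
  - rewrite Ex1. reflexivity.
  - unfold sig, z, tt, Cmult, Cplus, Cminus, Copp, RtoC, Ci, Cpi, tau, xi, kap; simpl. field. lra.
  - unfold sig, z, tt, Cmult, Cplus, Cminus, Copp, RtoC, Ci, Cpi, tau, xi, kap; simpl. field. lra.
Qed.

Lemma TERMp_mod : Cmod (term2 n (Cplus (Cmult (RtoC sig) tt) z) tt) = cc NN J r t n.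
Proof.
  unfold term2. rewrite Cmod_cexp. unfold cc. f_equal.
  assert (PI <> 0) by (apply PI_neq0).
  unfold sig, z, tt, Cmult, Cplus, RtoC, Ci, Cpi, tau, xi, kap; simpl. field. lra.
Qed.

Lemma TERMm_mod : Cmod (term2 n (Cminus (Cmult (RtoC sig) tt) z) tt) = cc NN J r t n.
Proof.
  unfold term2. rewrite Cmod_cexp. unfold cc. f_equal.
  assert (PI <> 0) by (apply PI_neq0).
  unfold sig, z, tt, Cmult, Cplus, Cminus, Copp, RtoC, Ci, Cpi, tau, xi, kap; simpl. field. lra.
Qed.

End Term.

Lemma exp_pow_INR a k : exp a ^ k = exp (INR k * a).
Proof.
  induction k. simpl. rewrite Rmult_0_l, exp_0. reflexivity.
  rewrite S_INR. simpl. rewrite IHk, <- exp_plus. f_equal. ring.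
Qed.



Lemma geom_bound (al J D y : R) (k : nat) : 0 < al -> INR k - D <= y ->
  exp (- al * (y ^ 2 - J ^ 2)) <= exp (al * (2 * D + 1 + J ^ 2)) * exp (- 2 * al) ^ k.
Proof.
  intros Hal Hy. rewrite exp_pow_INR, <- exp_plus.
  destruct (Req_dec (- al * (y ^ 2 - J ^ 2)) (al * (2 * D + 1 + J ^ 2) + INR k * (- 2 * al))) as [E|E].
  rewrite E; apply Rle_refl. left. apply exp_increasing.
  assert (y ^ 2 >= 2 * y - 1) by (pose proof (pow2_ge_0 (y - 1)); nra).
  assert (y ^ 2 >= 2 * INR k - 2 * D - 1) by lra.
  assert (al * (y ^ 2) >= al * (2 * INR k - 2 * D - 1)) by (apply Rmult_ge_compat_l; lra).
  assert (- al * (y ^ 2 - J ^ 2) <= al * (2 * D + 1 + J ^ 2) + INR k * (- 2 * al)) by nra.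
  lra.
Qed.

Lemma ex_geom_scal K q : 0 <= q < 1 -> ex_series (fun k => K * q ^ k).
Proof.
  intros Hq. apply (ex_series_scal_l K (fun k => q ^ k)). apply ex_series_geom.
  rewrite Rabs_pos_eq; lra.
Qed.

Lemma cc_summable (NN J r t : R) (al : Z -> C) : 1 <= NN -> 0 <= J -> 0 < r -> 0 < t ->
  (forall n, Cmod (al n) = 1) -> zsummable (fun n => Cmult (al n) (RtoC (cc NN J r t n))).
Proof.
  intros HNN HJ Hr Ht Hal.
  assert (Ha : 0 < t / (2 * r ^ 2)) by (apply Rdiv_lt_0_compat; nra).
  assert (Hq : 0 <= exp (- 2 * (t / (2 * r ^ 2))) < 1).
  { split. left; apply exp_pos. rewrite <- exp_0. apply exp_increasing. nra. }
  split.
  - apply (ex_series_le (K := R_AbsRing) (V := R_CompleteNormedModule) _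
      (fun k => exp ((t / (2 * r ^ 2)) * (2 * (NN / 2) + 1 + J ^ 2)) * exp (- 2 * (t / (2 * r ^ 2))) ^ k)).
    2: apply ex_geom_scal; auto.
    intros k. change (norm (Cmod (Cmult (al (Z.of_nat k)) (RtoC (cc NN J r t (Z.of_nat k))))))
       with (Rabs (Cmod (Cmult (al (Z.of_nat k)) (RtoC (cc NN J r t (Z.of_nat k)))))).
    rewrite Rabs_pos_eq by apply Cmod_ge_0. rewrite Cmod_mult, Hal, Cmod_R, Rmult_1_l.
    unfold cc. rewrite Rabs_pos_eq by (left; apply exp_pos).
    replace (- t * (kap NN J (Z.of_nat k) ^ 2 - J ^ 2) / (2 * r ^ 2))
      with (- (t / (2 * r ^ 2)) * (kap NN J (Z.of_nat k) ^ 2 - J ^ 2)) by (field; lra).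
    apply geom_bound; auto. unfold kap. rewrite <- INR_IZR_INZ.
    assert (0 <= INR k) by apply pos_INR. nra.
  - apply (ex_series_le (K := R_AbsRing) (V := R_CompleteNormedModule) _
      (fun k => exp ((t / (2 * r ^ 2)) * (2 * J + 1 + J ^ 2)) * exp (- 2 * (t / (2 * r ^ 2))) ^ k)).
    2: apply ex_geom_scal; auto.
    intros k. change (norm (Cmod (Cmult (al (- Z.of_nat (S k))%Z) (RtoC (cc NN J r t (- Z.of_nat (S k))%Z)))))
       with (Rabs (Cmod (Cmult (al (- Z.of_nat (S k))%Z) (RtoC (cc NN J r t (- Z.of_nat (S k))%Z))))).
    rewrite Rabs_pos_eq by apply Cmod_ge_0. rewrite Cmod_mult, Hal, Cmod_R, Rmult_1_l.
    unfold cc. rewrite Rabs_pos_eq by (left; apply exp_pos).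
    replace (- t * (kap NN J (- Z.of_nat (S k)) ^ 2 - J ^ 2) / (2 * r ^ 2))
      with (- (t / (2 * r ^ 2)) * ((- kap NN J (- Z.of_nat (S k))) ^ 2 - J ^ 2)) by (field; lra).
    apply geom_bound; auto. unfold kap. rewrite opp_IZR, <- INR_IZR_INZ, S_INR.
    assert (0 <= INR k) by apply pos_INR. nra.
Qed.

Lemma isC_scal (a : nat -> C) l g : isC a l -> isC (fun n => Cmult g (a n)) (Cmult g l).
Proof.
  intros H. assert (H1 := isC_fst _ _ H). assert (H2 := isC_snd _ _ H).
  apply isC_pair; simpl.
  - apply (is_series_minus (fun n => fst g * fst (a n)) (fun n => snd g * snd (a n))).
    apply (is_series_scal_l (fst g) _ _ H1). apply (is_series_scal_l (snd g) _ _ H2).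
  - apply (is_series_plus (fun n => fst g * snd (a n)) (fun n => snd g * fst (a n))).
    apply (is_series_scal_l (fst g) _ _ H2). apply (is_series_scal_l (snd g) _ _ H1).
Qed.

Lemma zsum_scal f g : zsummable f -> Cmult g (zsum f) = zsum (fun n => Cmult g (f n)).
Proof.
  intros [H1 H2].
  destruct (exC _ H1) as [l1 K1]. destruct (exC _ H2) as [l2 K2].
  rewrite (zsum_correct f l1 l2 K1 K2).
  rewrite (zsum_correct _ (Cmult g l1) (Cmult g l2)).
  - apply Cmult_plus_r.
  - apply (isC_scal (fun n => f (Z.of_nat n))); auto.
  - apply (isC_scal (fun n => f (- Z.of_nat (S n))%Z)); auto.
Qed.

Lemma zsum_opp f : Copp (zsum f) = zsum (fun n => Copp (f n)).
Proof.
  unfold zsum, CSeries, Copp, Cplus; simpl. rewrite !Series_opp. f_equal; ring.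
Qed.

Definition Fc (al : Z -> C) NN J r t (sg : R) (x : R) : C :=
  F (fun n => Cmult (al n) (RtoC (cc NN J r t n))) (fun n => sg * kap NN J n / r) x.

Definition one (n : Z) : C := RtoC 1.
Definition mone (n : Z) : C := RtoC (-1).
Definition alB (n : Z) : C := Cmult Ci (RtoC ((-1) ^ Z.abs_nat n)).
Definition malB (n : Z) : C := Copp (alB n).

Section Repr.
Variables (NN J r t x : R).
Hypothesis HNN : 1 <= NN.
Hypothesis HJ : 0 <= J.
Hypothesis Hr : 0 < r.
Hypothesis Ht : 0 < t.

Let sig := J / NN.
Let z := RtoC (NN * xi r x).
Let tt := Cmult (RtoC (NN ^ 2)) (tau r t).

Lemma NN0 : NN <> 0. Proof. lra. Qed.

Lemma sum_termp : zsummable (fun n => term2 n (Cplus (Cmult (RtoC sig) tt) z) tt).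
Proof.
  destruct (cc_summable NN J r t one HNN HJ Hr Ht) as [H1 H2].
  { intros; unfold one; rewrite Cmod_R; apply Rabs_R1. }
  split; [eapply ex_series_ext; [|exact H1] | eapply ex_series_ext; [|exact H2]];
  intros k; simpl; unfold one; rewrite Cmod_mult, Cmod_R, Rabs_R1, Rmult_1_l, Cmod_R;
  unfold sig, z, tt; rewrite TERMp_mod by (auto; lra); apply Rabs_pos_eq; left; apply exp_pos.
Qed.

Lemma sum_termm : zsummable (fun n => term2 n (Cminus (Cmult (RtoC sig) tt) z) tt).
Proof.
  destruct (cc_summable NN J r t one HNN HJ Hr Ht) as [H1 H2].
  { intros; unfold one; rewrite Cmod_R; apply Rabs_R1. }
  split; [eapply ex_series_ext; [|exact H1] | eapply ex_series_ext; [|exact H2]];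
  intros k; simpl; unfold one; rewrite Cmod_mult, Cmod_R, Rabs_R1, Rmult_1_l, Cmod_R;
  unfold sig, z, tt; rewrite TERMm_mod by (auto; lra); apply Rabs_pos_eq; left; apply exp_pos.
Qed.

Lemma sum_sterm (v : C) : zsummable (fun n => term2 n v tt) ->
  zsummable (fun n => Cmult (RtoC ((-1) ^ Z.abs_nat n)) (term2 n v tt)).
Proof.
  intros [H1 H2]. split; [eapply ex_series_ext; [|exact H1] | eapply ex_series_ext; [|exact H2]];
  intros k; simpl; rewrite Cmod_mult, Cmod_R, pow_1_abs; ring.
Qed.

Lemma theta2_eq v tau0 : theta2 v tau0 = zsum (fun n => term2 n v tau0).
Proof. reflexivity. Qed.
Lemma theta1_eq v tau0 : theta1 v tau0 =
  Cmult Ci (zsum (fun n => Cmult (RtoC ((-1) ^ Z.abs_nat n)) (term2 n v tau0))).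
Proof. reflexivity. Qed.

Lemma Xp : Cmult (ephase sig z) (theta2 (Cplus (Cmult (RtoC sig) tt) z) tt) = Fc one NN J r t 1 x.
Proof.
  rewrite theta2_eq, zsum_scal by apply sum_termp. unfold Fc, F. apply zsum_ext. intros n.
  unfold sig, z, tt. rewrite TERMp by (auto; lra). unfold one. rewrite Rmult_1_l.
  destruct (Ex (kap NN J n / r) x). unfold Cmult, RtoC; simpl; f_equal; ring.
Qed.

Lemma Xm : Cmult (ephase sig (Copp z)) (theta2 (Cminus (Cmult (RtoC sig) tt) z) tt) = Fc one NN J r t (-1) x.
Proof.
  rewrite theta2_eq, zsum_scal by apply sum_termm. unfold Fc, F. apply zsum_ext. intros n.
  unfold sig, z, tt. rewrite TERMm by (auto; lra). unfold one.
  replace (-1 * kap NN J n / r) with (- kap NN J n / r) by (field; lra).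
  destruct (Ex (- kap NN J n / r) x). unfold Cmult, RtoC; simpl; f_equal; ring.
Qed.

Lemma Yp : Cmult (ephase sig z) (theta1 (Cplus (Cmult (RtoC sig) tt) z) tt) = Fc alB NN J r t 1 x.
Proof.
  rewrite theta1_eq.
  replace (Cmult (ephase sig z) (Cmult Ci (zsum (fun n => Cmult (RtoC ((-1) ^ Z.abs_nat n)) (term2 n (Cplus (Cmult (RtoC sig) tt) z) tt)))))
    with (Cmult (Cmult (ephase sig z) Ci) (zsum (fun n => Cmult (RtoC ((-1) ^ Z.abs_nat n)) (term2 n (Cplus (Cmult (RtoC sig) tt) z) tt))))
    by (destruct (ephase sig z), (zsum (fun n => Cmult (RtoC ((-1) ^ Z.abs_nat n)) (term2 n (Cplus (Cmult (RtoC sig) tt) z) tt)));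
        unfold Cmult, Ci; simpl; f_equal; ring).
  rewrite zsum_scal by (apply sum_sterm; apply sum_termp). unfold Fc, F. apply zsum_ext. intros n.
  rewrite Rmult_1_l.
  transitivity (Cmult (Cmult Ci (RtoC ((-1) ^ Z.abs_nat n))) (Cmult (ephase sig z) (term2 n (Cplus (Cmult (RtoC sig) tt) z) tt))).
  { destruct (ephase sig z), (term2 n (Cplus (Cmult (RtoC sig) tt) z) tt). unfold Cmult, Ci, RtoC; simpl; f_equal; ring. }
  unfold sig, z, tt. rewrite TERMp by (auto; lra). unfold alB.
  destruct (Ex (kap NN J n / r) x). unfold Cmult, RtoC, Ci; simpl; f_equal; ring.
Qed.

Lemma Ym : Cmult (ephase sig (Copp z)) (theta1 (Cminus (Cmult (RtoC sig) tt) z) tt) = Copp (Fc malB NN J r t (-1) x).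
Proof.
  rewrite theta1_eq.
  replace (Cmult (ephase sig (Copp z)) (Cmult Ci (zsum (fun n => Cmult (RtoC ((-1) ^ Z.abs_nat n)) (term2 n (Cminus (Cmult (RtoC sig) tt) z) tt)))))
    with (Cmult (Cmult (ephase sig (Copp z)) Ci) (zsum (fun n => Cmult (RtoC ((-1) ^ Z.abs_nat n)) (term2 n (Cminus (Cmult (RtoC sig) tt) z) tt))))
    by (destruct (ephase sig (Copp z)), (zsum (fun n => Cmult (RtoC ((-1) ^ Z.abs_nat n)) (term2 n (Cminus (Cmult (RtoC sig) tt) z) tt)));
        unfold Cmult, Ci; simpl; f_equal; ring).
  rewrite zsum_scal by (apply sum_sterm; apply sum_termm). unfold Fc, F. rewrite zsum_opp. apply zsum_ext. intros n.
  replace (-1 * kap NN J n / r) with (- kap NN J n / r) by (field; lra).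
  transitivity (Cmult (Cmult Ci (RtoC ((-1) ^ Z.abs_nat n))) (Cmult (ephase sig (Copp z)) (term2 n (Cminus (Cmult (RtoC sig) tt) z) tt))).
  { destruct (ephase sig (Copp z)), (term2 n (Cminus (Cmult (RtoC sig) tt) z) tt). unfold Cmult, Ci, RtoC; simpl; f_equal; ring. }
  unfold sig, z, tt. rewrite TERMm by (auto; lra). unfold malB, alB.
  destruct (Ex (- kap NN J n / r) x). unfold Cmult, Copp, RtoC, Ci; simpl; f_equal; ring.
Qed.

Lemma ReprA : ThetaA sig z tt = Fc one NN J r t 1 x.
Proof. unfold ThetaA. apply Xp. Qed.

Lemma ReprB : ThetaB sig z tt = Cplus (Fc alB NN J r t 1 x) (Fc malB NN J r t (-1) x).
Proof.
  unfold ThetaB. rewrite Yp, Ym. unfold Cminus. destruct (Fc malB NN J r t (-1) x). unfold Copp; simpl. f_equal; f_equal; ring.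
Qed.

Lemma zsum_Fc_opp al sg : Copp (Fc al NN J r t sg x) = Fc (fun n => Copp (al n)) NN J r t sg x.
Proof.
  unfold Fc, F. rewrite zsum_opp. apply zsum_ext. intros n.
  destruct (al n), (Ex (sg * kap NN J n / r) x). unfold Cmult, Copp, RtoC; simpl; f_equal; ring.
Qed.

Lemma ReprC : ThetaC sig z tt = Cplus (Fc one NN J r t 1 x) (Fc mone NN J r t (-1) x).
Proof.
  unfold ThetaC. rewrite Xp, Xm. unfold Cminus. f_equal. rewrite zsum_Fc_opp.
  unfold Fc, F. apply zsum_ext. intros n. unfold one, mone, Copp, RtoC; simpl. f_equal. f_equal. f_equal; ring.
Qed.

Lemma ReprD : ThetaD sig z tt = Cplus (Fc one NN J r t 1 x) (Fc one NN J r t (-1) x).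
Proof. unfold ThetaD. rewrite Xp, Xm. reflexivity. Qed.

End Repr.

Definition VV r (a : Z -> C) (w : Z -> R) (b : Z -> C) (v : Z -> R) : C :=
  zsum (fun n => zsum (fun m => if Req_EM_T (w n) (v m)
        then Cmult (RtoC (2 * PI * r)) (Cmult (a n) (Cconj (b m))) else RtoC 0)).

Lemma zsum_zero f : (forall n, f n = RtoC 0) -> zsum f = RtoC 0.
Proof. intros H. rewrite (zsum_delta f 0); auto. Qed.

Lemma VAL_match r a w b v (mu : Z -> Z) : (forall n m, w n = v m <-> m = mu n) ->
  VV r a w b v = zsum (fun n => Cmult (RtoC (2 * PI * r)) (Cmult (a n) (Cconj (b (mu n))))).
Proof.
  intros H. unfold VV. apply zsum_ext. intros n. rewrite (zsum_delta _ (mu n)).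
  - destruct (Req_EM_T (w n) (v (mu n))) as [E|E]; auto. exfalso; apply E, H; auto.
  - intros m Hm. destruct (Req_EM_T (w n) (v m)) as [E|E]; auto. exfalso; apply Hm, H; auto.
Qed.

Lemma VAL_none r a w b v : (forall n m, w n <> v m) -> VV r a w b v = RtoC 0.
Proof.
  intros H. unfold VV. apply zsum_zero. intros n. apply zsum_zero. intros m.
  destruct (Req_EM_T (w n) (v m)) as [E|E]; auto. exfalso; eapply H; eauto.
Qed.

Lemma cc_prod NN J r ts t n : 0 < r ->
  cc NN J r t n * cc NN J r (ts - t) n = cc NN J r ts n.
Proof.
  intros Hr. unfold cc. rewrite <- exp_plus. f_equal. field. lra.
Qed.

Lemma CORE' (a b : Z -> C) (w v : Z -> R) r : 0 < r -> zsummable a -> zsummable b ->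
  (forall n m, exists z : Z, (w n - v m) * r = IZR z) ->
  @is_RInt CR (fun x => Cmult (Cconj (F b v x)) (F a w x)) (- (PI * r)) (PI * r) (VV r a w b v).
Proof.
  intros. replace (PI * r) with (- (PI * r) + 2 * PI * r) at 2 by ring.
  apply CORE; auto.
Qed.

Lemma uniqC (f : R -> C) a b l1 l2 : @is_RInt CR f a b l1 -> @is_RInt CR f a b l2 -> l1 = l2.
Proof.
  intros H1 H2.
  rewrite <- (@is_RInt_unique CRC f a b l1 H1). rewrite <- (@is_RInt_unique CRC f a b l2 H2). reflexivity.
Qed.

Lemma oppoppC (z : C) : @opp CR (@opp CR z) = z.
Proof. destruct z; unfold opp; simpl; unfold prod_opp, opp; simpl; f_equal; ring. Qed.

Lemma HALF (f : R -> C) L V : 0 <= L -> @is_RInt CR f (- L) L V -> (forall x, f (- x) = f x) ->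
  @is_RInt CR f 0 L (Cmult (RtoC (/ 2)) V).
Proof.
  intros HL H Hev.
  assert (E : @ex_RInt CRC f (- L) L) by (exists V; exact H).
  assert (E1 : @ex_RInt CRC f (- L) 0) by (apply (@ex_RInt_Chasles_1 CRC f (- L) 0 L); [lra | exact E]).
  assert (E2 : @ex_RInt CRC f 0 L) by (apply (@ex_RInt_Chasles_2 CRC f (- L) 0 L); [lra | exact E]).
  destruct E1 as [I1 H1]. destruct E2 as [I2 H2].
  assert (H12 := @is_RInt_Chasles CR f (- L) 0 L I1 I2 H1 H2).
  assert (EV := uniqC _ _ _ _ _ H12 H).
  assert (H1' : @is_RInt CR f 0 L I1).
  { rewrite <- (oppoppC I1). apply is_RInt_swap.
    apply (is_RInt_ext (fun y => @opp CR (@opp CR (f y)))).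
    { intros; apply oppoppC. }
    apply (@is_RInt_opp CR (fun y => @opp CR (f y))).
    apply (is_RInt_ext (fun y => @opp CR (f (- y)))).
    { intros; rewrite Hev; auto. }
    apply (@is_RInt_comp_opp CR f L 0 I1). replace (- 0) with 0 by ring. exact H1. }
  assert (E12 := uniqC _ _ _ _ _ H1' H2). subst I2.
  eapply is_RInt_val. exact H2. rewrite <- EV.
  destruct I1; unfold plus; simpl; unfold prod_plus, plus; simpl. unfold Cmult, RtoC; simpl. f_equal; field.
Qed.

Section Gen.
Variables (NN Jj Jk r ts t : R) (al be : Z -> C) (sp : bool) (mu : Z -> Z).
Hypothesis Hr : 0 < r.
Hypothesis Ht : 0 < t.
Hypothesis Hts : t < ts.
Hypothesis HNN : 1 <= NN.
Hypothesis HJj : 0 <= Jj.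
Hypothesis HJk : 0 <= Jk.
Hypothesis Hal : forall n, Cmult (al n) (Cconj (al n)) = RtoC 1.
Hypothesis Hbe : forall n, Cmult (be n) (Cconj (be n)) = RtoC 1.
Hypothesis Hint1 : forall n m, exists z, kap NN Jk n - kap NN Jj m = IZR z.
Hypothesis Hint2 : forall n m, exists z, kap NN Jk n + kap NN Jj m = IZR z.
Hypothesis Hpp : forall n m, kap NN Jk n = kap NN Jj m -> Jj = Jk /\ m = n.
Hypothesis Hpm : forall n m, kap NN Jk n = - kap NN Jj m <-> (sp = true /\ m = mu n).
Hypothesis Hsp : sp = true -> Jj = Jk /\ (forall n, kap NN Jj (mu n) ^ 2 = kap NN Jj n ^ 2) /\
   (forall n, Cmult (al n) (Cconj (be (mu n))) = RtoC 1 /\ Cmult (be n) (Cconj (al (mu n))) = RtoC 1).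

Lemma Cmod1 (g : C) : Cmult g (Cconj g) = RtoC 1 -> Cmod g = 1.
Proof.
  intros H. assert (K := Cmod2_conj g). rewrite H in K.
  assert (K2 : Cmod g ^ 2 = 1) by (injection K; auto).
  assert (0 <= Cmod g) by apply Cmod_ge_0. nra.
Qed.

Definition Mg (J : R) (s : R) (x : R) : C :=
  Cplus (Fc al NN J r s 1 x) (Fc be NN J r s (-1) x).

Definition XX : C := zsum (fun n => RtoC (2 * PI * r * cc NN Jk r ts n)).

Let a1 := fun n => Cmult (al n) (RtoC (cc NN Jk r t n)).
Let a2 := fun n => Cmult (be n) (RtoC (cc NN Jk r t n)).
Let b1 := fun n => Cmult (al n) (RtoC (cc NN Jj r (ts - t) n)).
Let b2 := fun n => Cmult (be n) (RtoC (cc NN Jj r (ts - t) n)).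
Let w1 := fun n => 1 * kap NN Jk n / r.
Let w2 := fun n => -1 * kap NN Jk n / r.
Let v1 := fun n => 1 * kap NN Jj n / r.
Let v2 := fun n => -1 * kap NN Jj n / r.

Lemma FULL : @is_RInt CR (fun x => Cmult (Cconj (Mg Jj (ts - t) x)) (Mg Jk t x)) (- (PI * r)) (PI * r)
  (Cplus (Cplus (VV r a1 w1 b1 v1) (VV r a2 w2 b1 v1)) (Cplus (VV r a1 w1 b2 v2) (VV r a2 w2 b2 v2))).
Proof.
  assert (Sa1 : zsummable a1) by (apply cc_summable; auto; intros; apply Cmod1; auto).
  assert (Sa2 : zsummable a2) by (apply cc_summable; auto; intros; apply Cmod1; auto).
  assert (Sb1 : zsummable b1) by (apply cc_summable; auto; try lra; intros; apply Cmod1; auto).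
  assert (Sb2 : zsummable b2) by (apply cc_summable; auto; try lra; intros; apply Cmod1; auto).
  assert (I11 : forall n m, exists z : Z, (w1 n - v1 m) * r = IZR z).
  { intros n m. destruct (Hint1 n m) as [z Hz]. exists z. rewrite <- Hz. unfold w1, v1. field. lra. }
  assert (I21 : forall n m, exists z : Z, (w2 n - v1 m) * r = IZR z).
  { intros n m. destruct (Hint2 n m) as [z Hz]. exists (- z)%Z. rewrite opp_IZR, <- Hz. unfold w2, v1. field. lra. }
  assert (I12 : forall n m, exists z : Z, (w1 n - v2 m) * r = IZR z).
  { intros n m. destruct (Hint2 n m) as [z Hz]. exists z. rewrite <- Hz. unfold w1, v2. field. lra. }
  assert (I22 : forall n m, exists z : Z, (w2 n - v2 m) * r = IZR z).
  { intros n m. destruct (Hint1 n m) as [z Hz]. exists (- z)%Z. rewrite opp_IZR, <- Hz. unfold w2, v2. field. lra. }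
  apply (is_RInt_ext (fun x => @plus CR
     (@plus CR (Cmult (Cconj (F b1 v1 x)) (F a1 w1 x)) (Cmult (Cconj (F b1 v1 x)) (F a2 w2 x)))
     (@plus CR (Cmult (Cconj (F b2 v2 x)) (F a1 w1 x)) (Cmult (Cconj (F b2 v2 x)) (F a2 w2 x))))).
  { intros x _. unfold Mg, Fc. fold a1 a2 b1 b2 w1 w2 v1 v2.
    destruct (F b1 v1 x), (F b2 v2 x), (F a1 w1 x), (F a2 w2 x).
    unfold plus; simpl; unfold prod_plus, plus; simpl. unfold Cmult, Cconj, Cplus; simpl. f_equal; ring. }
  change (Cplus (Cplus (VV r a1 w1 b1 v1) (VV r a2 w2 b1 v1)) (Cplus (VV r a1 w1 b2 v2) (VV r a2 w2 b2 v2)))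
    with (@plus CR (@plus CR (VV r a1 w1 b1 v1) (VV r a2 w2 b1 v1)) (@plus CR (VV r a1 w1 b2 v2) (VV r a2 w2 b2 v2))).
  apply is_RInt_plus; apply is_RInt_plus; apply CORE'; auto.
Qed.


Lemma unit_prod (g h : C) K c1 c2 : Cmult g (Cconj h) = RtoC 1 ->
  Cmult (RtoC K) (Cmult (Cmult g (RtoC c1)) (Cconj (Cmult h (RtoC c2)))) = RtoC (K * (c1 * c2)).
Proof.
  intros H.
  replace (Cmult (Cmult g (RtoC c1)) (Cconj (Cmult h (RtoC c2)))) with (Cmult (RtoC (c1 * c2)) (Cmult g (Cconj h)))
    by (destruct g, h; unfold Cmult, Cconj, RtoC; simpl; f_equal; ring).
  rewrite H. unfold Cmult, RtoC; simpl. f_equal; ring.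
Qed.

Lemma V11 : VV r a1 w1 b1 v1 = if Req_EM_T Jj Jk then XX else RtoC 0.
Proof.
  destruct (Req_EM_T Jj Jk) as [E|E].
  - rewrite (VAL_match r a1 w1 b1 v1 (fun n => n)).
    + unfold XX. apply zsum_ext. intros n. unfold a1, b1. rewrite E.
      rewrite unit_prod by auto. rewrite cc_prod by auto. reflexivity.
    + intros n m. unfold w1, v1. split.
      * intros Hw. apply Hpp. apply (Rmult_eq_reg_r (/ r)); [| apply Rinv_neq_0_compat; lra].
        unfold Rdiv in Hw. lra.
      * intros ->. rewrite E. reflexivity.
  - apply VAL_none. intros n m Hw. apply E. apply (Hpp n m).
    unfold w1, v1 in Hw. apply (Rmult_eq_reg_r (/ r)); [| apply Rinv_neq_0_compat; lra].
    unfold Rdiv in Hw. lra.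
Qed.

Lemma V22 : VV r a2 w2 b2 v2 = if Req_EM_T Jj Jk then XX else RtoC 0.
Proof.
  destruct (Req_EM_T Jj Jk) as [E|E].
  - rewrite (VAL_match r a2 w2 b2 v2 (fun n => n)).
    + unfold XX. apply zsum_ext. intros n. unfold a2, b2. rewrite E.
      rewrite unit_prod by auto. rewrite cc_prod by auto. reflexivity.
    + intros n m. unfold w2, v2. split.
      * intros Hw. apply Hpp. apply (Rmult_eq_reg_r (- / r)); [| apply Ropp_neq_0_compat; apply Rinv_neq_0_compat; lra].
        unfold Rdiv in Hw. lra.
      * intros ->. rewrite E. reflexivity.
  - apply VAL_none. intros n m Hw. apply E. apply (Hpp n m).
    unfold w2, v2 in Hw. apply (Rmult_eq_reg_r (- / r)); [| apply Ropp_neq_0_compat; apply Rinv_neq_0_compat; lra].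
    unfold Rdiv in Hw. lra.
Qed.

Lemma cc_mu n : sp = true -> cc NN Jj r (ts - t) (mu n) = cc NN Jj r (ts - t) n.
Proof. intros Hs. destruct (Hsp Hs) as [_ [K _]]. unfold cc. rewrite K. reflexivity. Qed.

Lemma V21 : VV r a2 w2 b1 v1 = if sp then XX else RtoC 0.
Proof.
  case_eq sp; intros Hs.
  - destruct (Hsp Hs) as [E [_ K]].
    rewrite (VAL_match r a2 w2 b1 v1 mu).
    + unfold XX. apply zsum_ext. intros n. unfold a2, b1. rewrite cc_mu by auto. rewrite E.
      rewrite unit_prod by apply K. rewrite cc_prod by auto. reflexivity.
    + intros n m. unfold w2, v1. split; intros Hw.
      * assert (K2 : kap NN Jk n = - kap NN Jj m).
        { apply (Rmult_eq_reg_r (- / r)); [| apply Ropp_neq_0_compat; apply Rinv_neq_0_compat; lra].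
          unfold Rdiv in Hw. lra. }
        apply Hpm in K2. destruct K2; auto.
      * assert (K2 : kap NN Jk n = - kap NN Jj m) by (apply Hpm; auto).
        rewrite K2. unfold Rdiv. ring.
  - apply VAL_none. intros n m Hw.
    assert (K : kap NN Jk n = - kap NN Jj m).
    { unfold w2, v1 in Hw. apply (Rmult_eq_reg_r (- / r)); [| apply Ropp_neq_0_compat; apply Rinv_neq_0_compat; lra].
      unfold Rdiv in Hw. lra. }
    apply Hpm in K. destruct K as [K1 _]. rewrite Hs in K1. discriminate.
Qed.

Lemma V12 : VV r a1 w1 b2 v2 = if sp then XX else RtoC 0.
Proof.
  case_eq sp; intros Hs.
  - destruct (Hsp Hs) as [E [_ K]].
    rewrite (VAL_match r a1 w1 b2 v2 mu).
    + unfold XX. apply zsum_ext. intros n. unfold a1, b2. rewrite cc_mu by auto. rewrite E.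
      rewrite unit_prod by apply K. rewrite cc_prod by auto. reflexivity.
    + intros n m. unfold w1, v2. split; intros Hw.
      * assert (K2 : kap NN Jk n = - kap NN Jj m).
        { apply (Rmult_eq_reg_r (/ r)); [| apply Rinv_neq_0_compat; lra].
          unfold Rdiv in Hw. lra. }
        apply Hpm in K2. destruct K2; auto.
      * assert (K2 : kap NN Jk n = - kap NN Jj m) by (apply Hpm; auto).
        rewrite K2. unfold Rdiv. ring.
  - apply VAL_none. intros n m Hw.
    assert (K : kap NN Jk n = - kap NN Jj m).
    { unfold w1, v2 in Hw. apply (Rmult_eq_reg_r (/ r)); [| apply Rinv_neq_0_compat; lra].
      unfold Rdiv in Hw. lra. }
    apply Hpm in K. destruct K as [K1 _]. rewrite Hs in K1. discriminate.
Qed.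

Lemma GENF (f : R -> C) : (forall x, f x = Cmult (Cconj (Mg Jj (ts - t) x)) (Mg Jk t x)) ->
  (forall x, f (- x) = f x) ->
  @is_RInt CR f 0 (PI * r)
    (if Req_EM_T Jj Jk then (if sp then Cmult (RtoC 2) XX else XX) else RtoC 0).
Proof.
  intros Hf Hev. eapply is_RInt_val. apply HALF; auto.
  { assert (0 < PI) by apply PI_RGT_0. nra. }
  { apply (is_RInt_ext (fun x => Cmult (Cconj (Mg Jj (ts - t) x)) (Mg Jk t x))).
    intros; auto. apply FULL. }
  rewrite V11, V22, V21, V12.
  destruct (Req_EM_T Jj Jk) as [E|E]; case_eq sp; intros Hs.
  - destruct XX; unfold Cmult, Cplus, RtoC; simpl; f_equal; field.
  - destruct XX; unfold Cmult, Cplus, RtoC; simpl; f_equal; field.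
  - exfalso. apply E. apply (Hsp Hs).
  - unfold Cmult, Cplus, RtoC; simpl; f_equal; field.
Qed.

End Gen.

Definition nnZ (R0 : rtype) (N : nat) : Z :=
  let n := Z.of_nat N in
  match R0 with
  | TA => n | TB => 2 * n - 1 | TBv => 2 * n | TC => 2 * n + 2
  | TCv => 2 * n | TBC => 2 * n + 1 | TD => 2 * n - 2 end.
Definition c0 (R0 : rtype) : Z :=
  match R0 with TA => -1 | TB => -2 | TBv => -2 | TC => 0 | TCv => -1 | TBC => 0 | TD => -2 end.

Lemma calN_Z R0 N : calN R0 N = IZR (nnZ R0 N).
Proof.
  destruct R0; unfold calN, nnZ; rewrite ?plus_IZR, ?minus_IZR, ?mult_IZR, <- ?INR_IZR_INZ;
  try reflexivity; ring.
Qed.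

Lemma Jfun_Z R0 j : Jfun R0 j = IZR (2 * Z.of_nat j + c0 R0) / 2.
Proof.
  destruct R0; unfold Jfun, c0; rewrite ?plus_IZR, ?minus_IZR, ?mult_IZR, <- ?INR_IZR_INZ; simpl; field.
Qed.

Lemma kapZ nn q n : kap (IZR nn) (IZR q / 2) n = IZR (nn * (2 * n - 1) + q) / 2.
Proof. unfold kap. rewrite plus_IZR, mult_IZR, minus_IZR, mult_IZR. simpl. field. Qed.

Lemma kap_eq nn q1 q2 n m : kap (IZR nn) (IZR q1 / 2) n = kap (IZR nn) (IZR q2 / 2) m <->
  (nn * (2 * n - 1) + q1 = nn * (2 * m - 1) + q2)%Z.
Proof.
  rewrite !kapZ. split; intros H.
  - apply eq_IZR. lra.
  - rewrite H. reflexivity.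
Qed.

Lemma kap_opp nn q1 q2 n m : kap (IZR nn) (IZR q1 / 2) n = - kap (IZR nn) (IZR q2 / 2) m <->
  (nn * (2 * n - 1) + q1 = - (nn * (2 * m - 1) + q2))%Z.
Proof.
  rewrite !kapZ. split; intros H.
  - apply eq_IZR. rewrite opp_IZR. lra.
  - rewrite H, opp_IZR. field.
Qed.

Lemma L_pp nn c N j k n m : (Z.of_nat N <= nn)%Z -> (1 <= j <= N)%nat -> (1 <= k <= N)%nat ->
  kap (IZR nn) (IZR (2 * Z.of_nat k + c) / 2) n = kap (IZR nn) (IZR (2 * Z.of_nat j + c) / 2) m ->
  IZR (2 * Z.of_nat j + c) / 2 = IZR (2 * Z.of_nat k + c) / 2 /\ m = n.
Proof.
  intros HN Hj Hk H. apply kap_eq in H.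
  assert (E : (nn * (n - m) = Z.of_nat j - Z.of_nat k)%Z) by lia.
  assert (n = m).
  { destruct (Z.eq_dec n m); auto.
    destruct (Z_lt_ge_dec (n - m) 0).
    - assert (nn * (n - m) <= - nn)%Z by nia. lia.
    - assert (nn * (n - m) >= nn)%Z by nia. lia. }
  subst. assert (j = k) by lia. subst. auto.
Qed.

Lemma half_diff A B z : (A - B = 2 * z)%Z -> IZR A / 2 - IZR B / 2 = IZR z.
Proof. intros H. apply (f_equal IZR) in H. rewrite minus_IZR, mult_IZR in H. simpl in H. lra. Qed.
Lemma half_sum A B z : (A + B = 2 * z)%Z -> IZR A / 2 + IZR B / 2 = IZR z.
Proof. intros H. apply (f_equal IZR) in H. rewrite plus_IZR, mult_IZR in H. simpl in H. lra. Qed.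

Lemma L_int1 nn c j k n m : exists z, kap (IZR nn) (IZR (2 * Z.of_nat k + c) / 2) n -
   kap (IZR nn) (IZR (2 * Z.of_nat j + c) / 2) m = IZR z.
Proof.
  exists (nn * (n - m) + Z.of_nat k - Z.of_nat j)%Z. rewrite !kapZ. apply half_diff. ring.
Qed.

Lemma L_int2 nn c j k n m : exists z, kap (IZR nn) (IZR (2 * Z.of_nat k + c) / 2) n +
   kap (IZR nn) (IZR (2 * Z.of_nat j + c) / 2) m = IZR z.
Proof.
  exists (nn * (n + m - 1) + Z.of_nat k + Z.of_nat j + c)%Z. rewrite !kapZ. apply half_sum. ring.
Qed.

Open Scope Z_scope.
Lemma PM_B (N j k : nat) n m : (1 <= j <= N)%nat -> (1 <= k <= N)%nat ->
  let nn := (2 * Z.of_nat N - 1) in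
  (nn * (2 * n - 1) + (2 * Z.of_nat k + -2) = - (nn * (2 * m - 1) + (2 * Z.of_nat j + -2))) <->
  (j = 1%nat /\ k = 1%nat /\ m = 1 - n).
Proof.
  intros Hj Hk nn. unfold nn. split.
  - intros H. assert (E : (2 * Z.of_nat N - 1) * (n + m - 1) = 2 - Z.of_nat j - Z.of_nat k) by lia.
    destruct (Z_lt_ge_dec (n + m - 1) 0).
    + assert ((2 * Z.of_nat N - 1) * (n + m - 1) <= - (2 * Z.of_nat N - 1)) by nia. lia.
    + destruct (Z_lt_ge_dec 0 (n + m - 1)).
      * assert ((2 * Z.of_nat N - 1) * (n + m - 1) >= (2 * Z.of_nat N - 1)) by nia. lia.
      * assert (H0 : n + m - 1 = 0) by lia. rewrite H0 in E. lia.
  - intros [-> [-> ->]]. lia.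
Qed.
Lemma PM_Bv (N j k : nat) n m : (1 <= j <= N)%nat -> (1 <= k <= N)%nat ->
  let nn := (2 * Z.of_nat N) in
  (nn * (2 * n - 1) + (2 * Z.of_nat k + -2) = - (nn * (2 * m - 1) + (2 * Z.of_nat j + -2))) <->
  (j = 1%nat /\ k = 1%nat /\ m = 1 - n).
Proof.
  intros Hj Hk nn. unfold nn. split.
  - intros H. assert (E : (2 * Z.of_nat N) * (n + m - 1) = 2 - Z.of_nat j - Z.of_nat k) by lia.
    destruct (Z_lt_ge_dec (n + m - 1) 0).
    + assert ((2 * Z.of_nat N) * (n + m - 1) <= - (2 * Z.of_nat N)) by nia. lia.
    + destruct (Z_lt_ge_dec 0 (n + m - 1)).
      * assert ((2 * Z.of_nat N) * (n + m - 1) >= (2 * Z.of_nat N)) by nia. lia.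
      * assert (H0 : n + m - 1 = 0) by lia. rewrite H0 in E. lia.
  - intros [-> [-> ->]]. lia.
Qed.
Lemma PM_D (N j k : nat) n m : (2 <= N)%nat -> (1 <= j <= N)%nat -> (1 <= k <= N)%nat ->
  let nn := (2 * Z.of_nat N - 2) in
  (nn * (2 * n - 1) + (2 * Z.of_nat k + -2) = - (nn * (2 * m - 1) + (2 * Z.of_nat j + -2))) <->
  ((j = 1%nat /\ k = 1%nat /\ m = 1 - n) \/ (j = N /\ k = N /\ m = - n)).
Proof.
  intros HN Hj Hk nn. unfold nn. split.
  - intros H. assert (E : (2 * Z.of_nat N - 2) * (n + m - 1) = 2 - Z.of_nat j - Z.of_nat k) by lia.
    destruct (Z_lt_ge_dec (n + m - 1) (-1)).
    + assert ((2 * Z.of_nat N - 2) * (n + m - 1) <= - 2 * (2 * Z.of_nat N - 2)) by nia. lia.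
    + destruct (Z_lt_ge_dec 0 (n + m - 1)).
      * assert ((2 * Z.of_nat N - 2) * (n + m - 1) >= (2 * Z.of_nat N - 2)) by nia. lia.
      * destruct (Z.eq_dec (n + m - 1) 0).
        -- left. rewrite e in E. lia.
        -- right. assert (n + m - 1 = -1) by lia. rewrite H0 in E. lia.
  - intros [[-> [-> ->]] | [-> [-> ->]]]; lia.
Qed.
Lemma PM_none (N j k : nat) n m nn c : (1 <= j <= N)%nat -> (1 <= k <= N)%nat ->
  (0 < 2 * 1 + c)%Z -> (2 * Z.of_nat N + c < nn)%Z ->
  ~ (nn * (2 * n - 1) + (2 * Z.of_nat k + c) = - (nn * (2 * m - 1) + (2 * Z.of_nat j + c))).
Proof.
  intros Hj Hk H2 H3 H. assert (E : 2 * nn * (n + m - 1) = - (2 * Z.of_nat j + 2 * Z.of_nat k + 2 * c)) by lia.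
  destruct (Z_lt_ge_dec (n + m - 1) 0).
  + assert (2 * nn * (n + m - 1) <= - (2 * nn)) by nia. lia.
  + assert (2 * nn * (n + m - 1) >= 0) by nia. lia.
Qed.

Close Scope Z_scope.
Open Scope R_scope.

Lemma Jpos (j : nat) c : (1 <= j)%nat -> (-2 <= c)%Z -> 0 <= IZR (2 * Z.of_nat j + c) / 2.
Proof.
  intros Hj Hc. assert (0 <= IZR (2 * Z.of_nat j + c)) by (apply IZR_le; lia). lra.
Qed.

Lemma GENZ nn c (N j k : nat) r ts t al be sp mu :
  (Z.of_nat N <= nn)%Z -> (1 <= j <= N)%nat -> (1 <= k <= N)%nat -> (1 <= nn)%Z -> (-2 <= c)%Z ->
  0 < r -> 0 < t -> t < ts ->
  (forall n, Cmult (al n) (Cconj (al n)) = RtoC 1) ->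
  (forall n, Cmult (be n) (Cconj (be n)) = RtoC 1) ->
  (forall n m, (nn * (2 * n - 1) + (2 * Z.of_nat k + c) = - (nn * (2 * m - 1) + (2 * Z.of_nat j + c)))%Z
      <-> (sp = true /\ m = mu n)) ->
  (sp = true -> j = k /\
     (forall n, (nn * (2 * mu n - 1) + (2 * Z.of_nat j + c) = - (nn * (2 * n - 1) + (2 * Z.of_nat j + c)))%Z) /\
     (forall n, Cmult (al n) (Cconj (be (mu n))) = RtoC 1 /\ Cmult (be n) (Cconj (al (mu n))) = RtoC 1)) ->
  forall f : R -> C,
  (forall x, f x = Cmult (Cconj (Mg (IZR nn) r al be (IZR (2 * Z.of_nat j + c) / 2) (ts - t) x))
                         (Mg (IZR nn) r al be (IZR (2 * Z.of_nat k + c) / 2) t x)) ->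
  (forall x, f (- x) = f x) ->
  @is_RInt CR f 0 (PI * r)
    (if Nat.eqb j k then (if sp then Cmult (RtoC 2) (XX (IZR nn) (IZR (2 * Z.of_nat k + c) / 2) r ts)
                         else XX (IZR nn) (IZR (2 * Z.of_nat k + c) / 2) r ts) else RtoC 0).
Proof.
  intros HN Hj Hk Hnn Hc Hr Ht Hts Hal Hbe Hpm Hsp f Hf Hev.
  eapply is_RInt_val. apply (GENF (IZR nn) (IZR (2 * Z.of_nat j + c) / 2) (IZR (2 * Z.of_nat k + c) / 2)
     r ts t al be sp mu); auto.
  - apply IZR_le in Hnn. auto.
  - apply Jpos; lia.
  - apply Jpos; lia.
  - intros; apply L_int1.
  - intros; apply L_int2.
  - intros n m H. eapply L_pp; eauto.
  - intros n m. rewrite kap_opp. apply Hpm.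
  - intros Hs. destruct (Hsp Hs) as [E [K1 K2]]. subst k. split; auto. split; auto.
    intros n. assert (K := proj2 (kap_opp nn _ _ (mu n) n) (K1 n)). rewrite K. ring.
  - destruct (Req_EM_T (IZR (2 * Z.of_nat j + c) / 2) (IZR (2 * Z.of_nat k + c) / 2)) as [E|E];
    destruct (Nat.eqb j k) eqn:Ejk; auto.
    + exfalso. apply Nat.eqb_neq in Ejk. apply Ejk.
      assert (E2 : IZR (2 * Z.of_nat j + c) = IZR (2 * Z.of_nat k + c)) by lra.
      apply eq_IZR in E2. lia.
    + exfalso. apply Nat.eqb_eq in Ejk. subst. auto.
Qed.

Lemma TH2 NN J r ts : 0 < r ->
  theta2 (Cmult (RtoC (NN * J)) (tau r ts)) (Cmult (RtoC (NN ^ 2)) (tau r ts)) =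
  zsum (fun n => RtoC (cc NN J r ts n)).
Proof.
  intros Hr. rewrite theta2_eq. apply zsum_ext. intros n. unfold term2.
  assert (PI <> 0) by apply PI_neq0.
  rewrite (cexp_form _ (- ts * (kap NN J n ^ 2 - J ^ 2) / (2 * r ^ 2)) 0).
  - unfold Ex. rewrite Rmult_0_r, cos_0, sin_0. unfold cc, Cmult, RtoC; simpl. f_equal; ring.
  - unfold Cmult, Cplus, RtoC, Ci, Cpi, tau, kap; simpl. field. lra.
  - unfold Cmult, Cplus, RtoC, Ci, Cpi, tau, kap; simpl. field. lra.
Qed.

Lemma Series_zero : Series (fun _ => 0) = 0.
Proof.
  rewrite (Series_ext _ (fun n => 0 * 0)) by (intros; ring). rewrite Series_scal_l. ring.
Qed.

Lemma realscale K (c : Z -> R) : Cmult (RtoC K) (zsum (fun n => RtoC (c n))) = zsum (fun n => RtoC (K * c n)).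
Proof.
  unfold zsum, CSeries, Cmult, Cplus, RtoC; simpl.
  rewrite !Series_zero, !Series_scal_l. f_equal; ring.
Qed.

Lemma mconst_gen NN J r ts : 0 < r ->
  Cmult (RtoC (2 * PI * r)) (theta2 (Cmult (RtoC (NN * J)) (tau r ts)) (Cmult (RtoC (NN ^ 2)) (tau r ts)))
  = XX NN J r ts.
Proof. intros Hr. rewrite TH2, realscale by auto. reflexivity. Qed.

Lemma mconst_sp NN r ts : 0 < r ->
  Cmult (RtoC (4 * PI * r)) (theta2 (RtoC 0) (Cmult (RtoC (NN ^ 2)) (tau r ts)))
  = Cmult (RtoC 2) (XX NN 0 r ts).
Proof.
  intros Hr. replace (RtoC 0) with (Cmult (RtoC (NN * 0)) (tau r ts))
    by (unfold Cmult, RtoC, tau; simpl; f_equal; ring).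
  rewrite TH2, realscale by auto. unfold XX. rewrite realscale. apply zsum_ext. intros n.
  f_equal. ring.
Qed.

Lemma M_eq R0 N r j x s : M R0 N r j x s =
  Theta (sharp_of R0) (Jfun R0 j / calN R0 N) (RtoC (calN R0 N * xi r x))
        (Cmult (RtoC (calN R0 N ^ 2)) (tau r s)).
Proof. reflexivity. Qed.

Lemma Copp2 z : Copp (Copp z) = z.
Proof. destruct z; unfold Copp; simpl; f_equal; ring. Qed.

Lemma RtoC_xi_opp NN r x : RtoC (NN * xi r (- x)) = Copp (RtoC (NN * xi r x)).
Proof. unfold RtoC, Copp, xi; simpl. f_equal; unfold Rdiv; ring. Qed.

Lemma ThetaB_odd s z tau0 : ThetaB s (Copp z) tau0 = Copp (ThetaB s z tau0).
Proof.
  unfold ThetaB, Cminus. rewrite Copp2.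
  destruct (Cmult (ephase s (Copp z)) (theta1 (Cplus (Cmult (RtoC s) tau0) (Copp z)) tau0)),
           (Cmult (ephase s z) (theta1 (Cplus (Cmult (RtoC s) tau0) z) tau0)).
  unfold Cplus, Copp; simpl; f_equal; ring.
Qed.
Lemma ThetaC_odd s z tau0 : ThetaC s (Copp z) tau0 = Copp (ThetaC s z tau0).
Proof.
  unfold ThetaC, Cminus. rewrite Copp2.
  destruct (Cmult (ephase s (Copp z)) (theta2 (Cplus (Cmult (RtoC s) tau0) (Copp z)) tau0)),
           (Cmult (ephase s z) (theta2 (Cplus (Cmult (RtoC s) tau0) z) tau0)).
  unfold Cplus, Copp; simpl; f_equal; ring.
Qed.
Lemma ThetaD_even s z tau0 : ThetaD s (Copp z) tau0 = ThetaD s z tau0.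
Proof.
  unfold ThetaD, Cminus. rewrite Copp2.
  destruct (Cmult (ephase s (Copp z)) (theta2 (Cplus (Cmult (RtoC s) tau0) (Copp z)) tau0)),
           (Cmult (ephase s z) (theta2 (Cplus (Cmult (RtoC s) tau0) z) tau0)).
  unfold Cplus, Copp; simpl; f_equal; ring.
Qed.

Lemma conj_opp_mult (a b : C) : Cmult (Cconj (Copp a)) (Copp b) = Cmult (Cconj a) b.
Proof. destruct a, b; unfold Cmult, Cconj, Copp; simpl; f_equal; ring. Qed.

Lemma sgn_1mn n : (-1) ^ Z.abs_nat n * (-1) ^ Z.abs_nat (1 - n) = -1.
Proof.
  rewrite <- pow_add.
  assert (exists q, (Z.abs_nat n + Z.abs_nat (1 - n) = S (2 * q))%nat) as [q ->].
  { destruct (Z_le_gt_dec 1 n).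
    - exists (Z.to_nat (n - 1)). lia.
    - exists (Z.to_nat (- n)). lia. }
  rewrite pow_1_odd. reflexivity.
Qed.

Lemma sgn_sq n : (-1) ^ Z.abs_nat n * (-1) ^ Z.abs_nat n = 1.
Proof. rewrite <- pow_add. replace (Z.abs_nat n + Z.abs_nat n)%nat with (2 * Z.abs_nat n)%nat by lia. apply pow_1_even. Qed.

Lemma alB_unit n : Cmult (alB n) (Cconj (alB n)) = RtoC 1.
Proof.
  unfold alB, Cmult, Cconj, Ci, RtoC; simpl. assert (K := sgn_sq n).
  generalize dependent ((-1) ^ Z.abs_nat n). intros s K. f_equal; nra.
Qed.
Lemma malB_unit n : Cmult (malB n) (Cconj (malB n)) = RtoC 1.
Proof.
  unfold malB, alB, Cmult, Cconj, Copp, Ci, RtoC; simpl. assert (K := sgn_sq n).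
  generalize dependent ((-1) ^ Z.abs_nat n). intros s K. f_equal; nra.
Qed.
Lemma alB_pair n : Cmult (alB n) (Cconj (malB (1 - n)%Z)) = RtoC 1 /\
                   Cmult (malB n) (Cconj (alB (1 - n)%Z)) = RtoC 1.
Proof.
  assert (K := sgn_1mn n). unfold malB, alB.
  generalize dependent ((-1) ^ Z.abs_nat (1 - n)). generalize dependent ((-1) ^ Z.abs_nat n).
  intros s1 s2 K. unfold Cmult, Cconj, Copp, Ci, RtoC; simpl. split; f_equal; nra.
Qed.
Lemma one_unit n : Cmult (one n) (Cconj (one n)) = RtoC 1.
Proof. unfold one, Cmult, Cconj, RtoC; simpl; f_equal; ring. Qed.
Lemma mone_unit n : Cmult (mone n) (Cconj (mone n)) = RtoC 1.
Proof. unfold mone, Cmult, Cconj, RtoC; simpl; f_equal; ring. Qed.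

Lemma cfour r X : Cmult (RtoC (4 * PI * r)) X = Cmult (RtoC 2) (Cmult (RtoC (2 * PI * r)) X).
Proof. destruct X; unfold Cmult, RtoC; simpl; f_equal; ring. Qed.

Lemma case_B (N : nat) r ts t j k : (1 <= j <= N)%nat -> (1 <= k <= N)%nat -> 0 < r -> 0 < t -> t < ts ->
  @is_RInt CR (fun x => Cmult (Cconj (M TB N r j x (ts - t))) (M TB N r k x t)) 0 (PI * r)
   (if Nat.eqb j k then mconst TB N r j ts else RtoC 0).
Proof.
  intros Hj Hk Hr Ht Hts.
  assert (HM : forall i x s, (1 <= i <= N)%nat -> 0 < s ->
     M TB N r i x s = Mg (IZR (nnZ TB N)) r alB malB (IZR (2 * Z.of_nat i + c0 TB) / 2) s x).
  { intros i x s Hi Hs. rewrite M_eq, calN_Z, Jfun_Z. apply ReprB; auto.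
    - apply IZR_le. unfold nnZ. lia.
    - apply Jpos. lia. unfold c0. lia. }
  eapply is_RInt_val.
  apply (GENZ (nnZ TB N) (c0 TB) N j k r ts t alB malB (andb (Nat.eqb j 1) (Nat.eqb k 1)) (fun n => 1 - n)%Z);
    auto; try (unfold nnZ, c0; lia).
  - apply alB_unit.
  - apply malB_unit.
  - intros n m. unfold nnZ, c0. rewrite PM_B by auto. split.
    + intros [-> [-> ->]]. auto.
    + intros [Hs ->]. apply Bool.andb_true_iff in Hs. destruct Hs as [H1 H2].
      apply Nat.eqb_eq in H1. apply Nat.eqb_eq in H2. auto.
  - intros Hs. apply Bool.andb_true_iff in Hs. destruct Hs as [H1 H2].
    apply Nat.eqb_eq in H1. apply Nat.eqb_eq in H2. subst. split; auto. split.
    + intros n. unfold nnZ, c0. change (Z.of_nat 1) with 1%Z. ring.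
    + intros n. apply alB_pair.
  - intros x. rewrite !HM; auto. lra.
  - intros x. rewrite !M_eq, !RtoC_xi_opp. change (Theta (sharp_of TB)) with ThetaB.
    rewrite !ThetaB_odd, conj_opp_mult. reflexivity.
  - destruct (Nat.eqb j k) eqn:E; [apply Nat.eqb_eq in E; subst k | reflexivity].
    unfold mconst. cbv beta iota zeta.
    destruct (Nat.eqb j 1) eqn:E1; simpl andb.
    + apply Nat.eqb_eq in E1. subst j. rewrite mconst_sp by auto. rewrite calN_Z.
      replace (IZR (2 * Z.of_nat 1 + c0 TB) / 2) with 0 by (simpl; field). reflexivity.
    + rewrite calN_Z, Jfun_Z, mconst_gen by auto. reflexivity.
Qed.

Lemma case_Bv (N : nat) r ts t j k : (1 <= j <= N)%nat -> (1 <= k <= N)%nat -> 0 < r -> 0 < t -> t < ts ->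
  @is_RInt CR (fun x => Cmult (Cconj (M TBv N r j x (ts - t))) (M TBv N r k x t)) 0 (PI * r)
   (if Nat.eqb j k then mconst TBv N r j ts else RtoC 0).
Proof.
  intros Hj Hk Hr Ht Hts.
  assert (HM : forall i x s, (1 <= i <= N)%nat -> 0 < s ->
     M TBv N r i x s = Mg (IZR (nnZ TBv N)) r alB malB (IZR (2 * Z.of_nat i + c0 TBv) / 2) s x).
  { intros i x s Hi Hs. rewrite M_eq, calN_Z, Jfun_Z. apply ReprB; auto.
    - apply IZR_le. unfold nnZ. lia.
    - apply Jpos. lia. unfold c0. lia. }
  eapply is_RInt_val.
  apply (GENZ (nnZ TBv N) (c0 TBv) N j k r ts t alB malB (andb (Nat.eqb j 1) (Nat.eqb k 1)) (fun n => 1 - n)%Z);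
    auto; try (unfold nnZ, c0; lia).
  - apply alB_unit.
  - apply malB_unit.
  - intros n m. unfold nnZ, c0. rewrite PM_Bv by auto. split.
    + intros [-> [-> ->]]. auto.
    + intros [Hs ->]. apply Bool.andb_true_iff in Hs. destruct Hs as [H1 H2].
      apply Nat.eqb_eq in H1. apply Nat.eqb_eq in H2. auto.
  - intros Hs. apply Bool.andb_true_iff in Hs. destruct Hs as [H1 H2].
    apply Nat.eqb_eq in H1. apply Nat.eqb_eq in H2. subst. split; auto. split.
    + intros n. unfold nnZ, c0. change (Z.of_nat 1) with 1%Z. ring.
    + intros n. apply alB_pair.
  - intros x. rewrite !HM; auto. lra.
  - intros x. rewrite !M_eq, !RtoC_xi_opp. change (Theta (sharp_of TBv)) with ThetaB.
    rewrite !ThetaB_odd, conj_opp_mult. reflexivity.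
  - destruct (Nat.eqb j k) eqn:E; [apply Nat.eqb_eq in E; subst k | reflexivity].
    unfold mconst. cbv beta iota zeta.
    destruct (Nat.eqb j 1) eqn:E1; simpl andb.
    + apply Nat.eqb_eq in E1. subst j. rewrite mconst_sp by auto. rewrite calN_Z.
      replace (IZR (2 * Z.of_nat 1 + c0 TBv) / 2) with 0 by (simpl; field). reflexivity.
    + rewrite calN_Z, Jfun_Z, mconst_gen by auto. reflexivity.
Qed.

Lemma case_C (N : nat) r ts t j k : (1 <= j <= N)%nat -> (1 <= k <= N)%nat -> 0 < r -> 0 < t -> t < ts ->
  @is_RInt CR (fun x => Cmult (Cconj (M TC N r j x (ts - t))) (M TC N r k x t)) 0 (PI * r)
   (if Nat.eqb j k then mconst TC N r j ts else RtoC 0).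
Proof.
  intros Hj Hk Hr Ht Hts.
  assert (HM : forall i x s, (1 <= i <= N)%nat -> 0 < s ->
     M TC N r i x s = Mg (IZR (nnZ TC N)) r one mone (IZR (2 * Z.of_nat i + c0 TC) / 2) s x).
  { intros i x s Hi Hs. rewrite M_eq, calN_Z, Jfun_Z. apply ReprC; auto.
    - apply IZR_le. unfold nnZ. lia.
    - apply Jpos. lia. unfold c0. lia. }
  eapply is_RInt_val.
  apply (GENZ (nnZ TC N) (c0 TC) N j k r ts t one mone false (fun n => n));
    auto; try (unfold nnZ, c0; lia).
  - apply one_unit.
  - apply mone_unit.
  - intros n m. split.
    + intros H. exfalso. revert H. apply (PM_none N j k n m); unfold nnZ, c0; auto; lia.
    + intros [H _]. discriminate.
  - intros x. rewrite !HM; auto. lra.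
  - intros x. rewrite !M_eq, !RtoC_xi_opp. change (Theta (sharp_of TC)) with ThetaC.
    rewrite !ThetaC_odd, conj_opp_mult. reflexivity.
  - destruct (Nat.eqb j k) eqn:E; [apply Nat.eqb_eq in E; subst k | reflexivity].
    unfold mconst. cbv beta iota zeta.
    rewrite calN_Z, Jfun_Z, mconst_gen by auto. reflexivity.
Qed.

Lemma case_Cv (N : nat) r ts t j k : (1 <= j <= N)%nat -> (1 <= k <= N)%nat -> 0 < r -> 0 < t -> t < ts ->
  @is_RInt CR (fun x => Cmult (Cconj (M TCv N r j x (ts - t))) (M TCv N r k x t)) 0 (PI * r)
   (if Nat.eqb j k then mconst TCv N r j ts else RtoC 0).
Proof.
  intros Hj Hk Hr Ht Hts.
  assert (HM : forall i x s, (1 <= i <= N)%nat -> 0 < s ->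
     M TCv N r i x s = Mg (IZR (nnZ TCv N)) r one mone (IZR (2 * Z.of_nat i + c0 TCv) / 2) s x).
  { intros i x s Hi Hs. rewrite M_eq, calN_Z, Jfun_Z. apply ReprC; auto.
    - apply IZR_le. unfold nnZ. lia.
    - apply Jpos. lia. unfold c0. lia. }
  eapply is_RInt_val.
  apply (GENZ (nnZ TCv N) (c0 TCv) N j k r ts t one mone false (fun n => n));
    auto; try (unfold nnZ, c0; lia).
  - apply one_unit.
  - apply mone_unit.
  - intros n m. split.
    + intros H. exfalso. revert H. apply (PM_none N j k n m); unfold nnZ, c0; auto; lia.
    + intros [H _]. discriminate.
  - intros x. rewrite !HM; auto. lra.
  - intros x. rewrite !M_eq, !RtoC_xi_opp. change (Theta (sharp_of TCv)) with ThetaC.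
    rewrite !ThetaC_odd, conj_opp_mult. reflexivity.
  - destruct (Nat.eqb j k) eqn:E; [apply Nat.eqb_eq in E; subst k | reflexivity].
    unfold mconst. cbv beta iota zeta.
    rewrite calN_Z, Jfun_Z, mconst_gen by auto. reflexivity.
Qed.

Lemma case_BC (N : nat) r ts t j k : (1 <= j <= N)%nat -> (1 <= k <= N)%nat -> 0 < r -> 0 < t -> t < ts ->
  @is_RInt CR (fun x => Cmult (Cconj (M TBC N r j x (ts - t))) (M TBC N r k x t)) 0 (PI * r)
   (if Nat.eqb j k then mconst TBC N r j ts else RtoC 0).
Proof.
  intros Hj Hk Hr Ht Hts.
  assert (HM : forall i x s, (1 <= i <= N)%nat -> 0 < s ->
     M TBC N r i x s = Mg (IZR (nnZ TBC N)) r one mone (IZR (2 * Z.of_nat i + c0 TBC) / 2) s x).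
  { intros i x s Hi Hs. rewrite M_eq, calN_Z, Jfun_Z. apply ReprC; auto.
    - apply IZR_le. unfold nnZ. lia.
    - apply Jpos. lia. unfold c0. lia. }
  eapply is_RInt_val.
  apply (GENZ (nnZ TBC N) (c0 TBC) N j k r ts t one mone false (fun n => n));
    auto; try (unfold nnZ, c0; lia).
  - apply one_unit.
  - apply mone_unit.
  - intros n m. split.
    + intros H. exfalso. revert H. apply (PM_none N j k n m); unfold nnZ, c0; auto; lia.
    + intros [H _]. discriminate.
  - intros x. rewrite !HM; auto. lra.
  - intros x. rewrite !M_eq, !RtoC_xi_opp. change (Theta (sharp_of TBC)) with ThetaC.
    rewrite !ThetaC_odd, conj_opp_mult. reflexivity.
  - destruct (Nat.eqb j k) eqn:E; [apply Nat.eqb_eq in E; subst k | reflexivity].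
    unfold mconst. cbv beta iota zeta.
    rewrite calN_Z, Jfun_Z, mconst_gen by auto. reflexivity.
Qed.

Lemma case_D (N : nat) r ts t j k : (2 <= N)%nat -> (1 <= j <= N)%nat -> (1 <= k <= N)%nat -> 0 < r -> 0 < t -> t < ts ->
  @is_RInt CR (fun x => Cmult (Cconj (M TD N r j x (ts - t))) (M TD N r k x t)) 0 (PI * r)
   (if Nat.eqb j k then mconst TD N r j ts else RtoC 0).
Proof.
  intros HN Hj Hk Hr Ht Hts.
  assert (HM : forall i x s, (1 <= i <= N)%nat -> 0 < s ->
     M TD N r i x s = Mg (IZR (nnZ TD N)) r one one (IZR (2 * Z.of_nat i + c0 TD) / 2) s x).
  { intros i x s Hi Hs. rewrite M_eq, calN_Z, Jfun_Z. apply ReprD; auto.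
    - apply IZR_le. unfold nnZ. lia.
    - apply Jpos. lia. unfold c0. lia. }
  eapply is_RInt_val.
  apply (GENZ (nnZ TD N) (c0 TD) N j k r ts t one one
     (orb (andb (Nat.eqb j 1) (Nat.eqb k 1)) (andb (Nat.eqb j N) (Nat.eqb k N)))
     (if Nat.eqb j 1 then (fun n => 1 - n)%Z else (fun n => - n)%Z));
    auto; try (unfold nnZ, c0; lia).
  - apply one_unit.
  - apply one_unit.
  - intros n m. unfold nnZ, c0. rewrite PM_D by auto. split.
    + intros [[-> [-> ->]] | [-> [-> ->]]].
      * auto.
      * rewrite Nat.eqb_refl. destruct (Nat.eqb N 1) eqn:E1.
        -- apply Nat.eqb_eq in E1. lia.
        -- rewrite Bool.orb_true_r. auto.
    + intros [Hs Hm]. apply Bool.orb_true_iff in Hs. destruct Hs as [Hs|Hs];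
        apply Bool.andb_true_iff in Hs; destruct Hs as [H1 H2];
        apply Nat.eqb_eq in H1; apply Nat.eqb_eq in H2; subst.
      * left. auto.
      * right. destruct (Nat.eqb N 1) eqn:E1; [apply Nat.eqb_eq in E1; lia|]. auto.
  - intros Hs. apply Bool.orb_true_iff in Hs. destruct Hs as [Hs|Hs];
      apply Bool.andb_true_iff in Hs; destruct Hs as [H1 H2];
      apply Nat.eqb_eq in H1; apply Nat.eqb_eq in H2; subst.
    + split; auto. split.
      * intros n. unfold nnZ, c0. rewrite Nat.eqb_refl. cbv beta. change (Z.of_nat 1) with 1%Z. ring.
      * intros n. unfold one, Cmult, Cconj, RtoC; simpl; split; f_equal; ring.
    + split; auto. split.
      * intros n. unfold nnZ, c0. destruct (Nat.eqb N 1) eqn:E1; [apply Nat.eqb_eq in E1; lia|]. cbv beta. ring.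
      * intros n. unfold one, Cmult, Cconj, RtoC; simpl; split; f_equal; ring.
  - intros x. rewrite !HM; auto. lra.
  - intros x. rewrite !M_eq, !RtoC_xi_opp. change (Theta (sharp_of TD)) with ThetaD.
    rewrite !ThetaD_even. reflexivity.
  - destruct (Nat.eqb j k) eqn:E; [apply Nat.eqb_eq in E; subst k | reflexivity].
    unfold mconst. cbv beta iota zeta.
    destruct (Nat.eqb j 1) eqn:E1; simpl andb.
    + apply Nat.eqb_eq in E1. subst j. rewrite mconst_sp by auto. rewrite calN_Z.
      replace (IZR (2 * Z.of_nat 1 + c0 TD) / 2) with 0 by (simpl; field). reflexivity.
    + destruct (Nat.eqb j N) eqn:E2; simpl orb.
      * apply Nat.eqb_eq in E2. subst j.
        change (INR N - 1) with (Jfun TD N).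
        rewrite cfour, calN_Z, Jfun_Z, mconst_gen by auto. reflexivity.
      * rewrite calN_Z, Jfun_Z, mconst_gen by auto. reflexivity.
Qed.

Lemma case_A (N : nat) r ts t j k : (1 <= j <= N)%nat -> (1 <= k <= N)%nat -> 0 < r -> 0 < t -> t < ts ->
  @is_RInt CR (fun x => Cmult (Cconj (M TA N r j x (ts - t))) (M TA N r k x t)) 0 (2 * PI * r)
   (if Nat.eqb j k then mconst TA N r j ts else RtoC 0).
Proof.
  intros Hj Hk Hr Ht Hts.
  set (nn := nnZ TA N).
  assert (Hnn : 1 <= IZR nn) by (apply IZR_le; unfold nn, nnZ; lia).
  assert (HM : forall i x s, (1 <= i <= N)%nat -> 0 < s ->
     M TA N r i x s = Fc one (IZR nn) (IZR (2 * Z.of_nat i + c0 TA) / 2) r s 1 x).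
  { intros i x s Hi Hs. rewrite M_eq, calN_Z, Jfun_Z. apply ReprA; auto.
    apply Jpos. lia. unfold c0. lia. }
  set (Jj := IZR (2 * Z.of_nat j + c0 TA) / 2).
  set (Jk := IZR (2 * Z.of_nat k + c0 TA) / 2).
  assert (HJj : 0 <= Jj) by (apply Jpos; [lia | unfold c0; lia]).
  assert (HJk : 0 <= Jk) by (apply Jpos; [lia | unfold c0; lia]).
  apply (is_RInt_ext (fun x => Cmult (Cconj (Fc one (IZR nn) Jj r (ts - t) 1 x)) (Fc one (IZR nn) Jk r t 1 x))).
  { intros x _. rewrite !HM; auto. lra. }
  eapply is_RInt_val.
  - unfold Fc. replace (2 * PI * r) with (0 + 2 * PI * r) by ring. apply CORE; auto.
    + apply cc_summable; auto. intros; apply Cmod1; apply one_unit.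
    + apply cc_summable; auto. lra. intros; apply Cmod1; apply one_unit.
    + intros n m. destruct (L_int1 nn (c0 TA) j k n m) as [z Hz]. exists z. rewrite <- Hz.
      fold Jj Jk. field. lra.
  -
    change (VV r (fun n => Cmult (one n) (RtoC (cc (IZR nn) Jk r t n))) (fun n => 1 * kap (IZR nn) Jk n / r)
               (fun n => Cmult (one n) (RtoC (cc (IZR nn) Jj r (ts - t) n))) (fun n => 1 * kap (IZR nn) Jj n / r)
            = if Nat.eqb j k then mconst TA N r j ts else RtoC 0).
    rewrite V11; auto.
    2:{ intros; apply one_unit. }
    2:{ intros n m H. eapply L_pp; eauto. unfold nn, nnZ. lia. }
    destruct (Req_EM_T Jj Jk) as [E|E]; destruct (Nat.eqb j k) eqn:Ejk; auto.
    + apply Nat.eqb_eq in Ejk. subst k. unfold mconst. cbv beta iota zeta.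
      rewrite calN_Z, Jfun_Z, mconst_gen by auto. reflexivity.
    + exfalso. apply Nat.eqb_neq in Ejk. apply Ejk. unfold Jj, Jk in E.
      assert (E2 : IZR (2 * Z.of_nat j + c0 TA) = IZR (2 * Z.of_nat k + c0 TA)) by lra.
      apply eq_IZR in E2. lia.
    + exfalso. apply Nat.eqb_eq in Ejk. subst. auto.
Qed.

Theorem lemma2p1 (R0 : rtype) (N : nat) (r ts t : R) (j k : nat) :
  (R0 = TD -> (2 <= N)%nat) ->
  0 < r -> 0 < ts -> 0 < t -> t < ts ->
  (1 <= j <= N)%nat -> (1 <= k <= N)%nat ->
  is_RInt (fun x => Cmult (Cconj (M R0 N r j x (ts - t))) (M R0 N r k x t))
    0 (upper R0 r)
    (if Nat.eqb j k then mconst R0 N r j ts else RtoC 0).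
Proof.
  intros HD Hr Hts0 Ht Hts Hj Hk. destruct R0; simpl upper.
  - apply case_A; auto.
  - apply case_B; auto.
  - apply case_Bv; auto.
  - apply case_C; auto.
  - apply case_Cv; auto.
  - apply case_BC; auto.
  - apply case_D; auto.
Qed.
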